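(* Let $N,A,B\ge1$ and $a\in\mathbb Z^3$ with $|a|\sim A$. Then for either choice of sign $\pm$, $$\sup_{m\in\mathbb Z}\#\{n\in\mathbb Z^3:|n|\sim N,\ |n+a|\sim B,\ |\langle a+n\rangle\pm\langle n\rangle-m|\lesssim1\}\lesssim\min(A,B,N)^{-1}\min(B,N)^3.$$
   Context: $\langle n\rangle=(1+|n|^2)^{1/2}$. ''$|x|\sim N$'' means $c^{-1}N\le|x|\le cN$ for a fixed absolute constant $c$ (and $|x|\le c$ when the scale is $1$); ''$\lesssim1$'' inside the set means bounded by a fixed absolute constant. Implicit constants are absolute. *)

(* Defs.v *)
From Stdlib Require Import Reals List ZArith.
Open Scope R_scope.

Definition Z3 : Type := (Z * Z * Z)%type.

Definition z3add (n a : Z3) : Z3 :=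
  match n, a with (n1, n2, n3), (a1, a2, a3) => ((n1 + a1)%Z, (n2 + a2)%Z, (n3 + a3)%Z) end.

Definition nsq (n : Z3) : R :=
  match n with (n1, n2, n3) => IZR n1 ^ 2 + IZR n2 ^ 2 + IZR n3 ^ 2 end.

Definition znorm (n : Z3) : R := sqrt (nsq n).

Definition jbr (n : Z3) : R := sqrt (1 + nsq n).

(* "|x| ~ N" with absolute constant c:  c^{-1} N <= |x| <= c N,
   and |x| <= c when the scale is 1. *)
Definition sim (c x N : R) : Prop :=
  if Req_EM_T N 1 then x <= c else / c * N <= x /\ x <= c * N.

Definition pm (s : bool) (x y : R) : R := if s then x + y else x - y.

Definition Sset (c C0 N B : R) (a : Z3) (s : bool) (m : Z) (n : Z3) : Prop :=
  sim c (znorm n) N /\ sim c (znorm (z3add a n)) B /\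
  Rabs (pm s (jbr (z3add a n)) (jbr n) - IZR m) <= C0.

(* Main.v *)
Require Import Defs.
From Stdlib Require Import Reals List ZArith Lra Lia Psatz.
Open Scope R_scope.

Lemma filter_split_length {A} (f : A -> bool) (l : list A) :
  length l = (length (filter f l) + length (filter (fun x => negb (f x)) l))%nat.
Proof.
  induction l as [|x l IH]; simpl; auto.
  destruct (f x); simpl; lia.
Qed.

Lemma NoDup_map_inj_on {A B} (f : A -> B) (l : list A) :
  NoDup l -> (forall x y, In x l -> In y l -> f x = f y -> x = y) -> NoDup (map f l).
Proof.
  induction l as [|x l IH]; intros Hn Hi; simpl; constructor.
  - inversion Hn; subst. intro Hin. apply in_map_iff in Hin as [y [Hy1 Hy2]].
    assert (y = x) by (apply Hi; simpl; auto). subst. contradiction.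
  - inversion Hn; subst. apply IH; auto. intros; apply Hi; simpl; auto.
Qed.

Lemma count_fibers {A K} (dK : forall x y : K, {x = y} + {x <> y}) (pi : A -> K)
  (B : R) (F : list K) : forall (l : list A),
  NoDup l -> NoDup F -> (forall x, In x l -> In (pi x) F) ->
  (forall k, In k F -> forall l', NoDup l' -> (forall x, In x l' -> In x l /\ pi x = k) ->
     INR (length l') <= B) ->
  INR (length l) <= INR (length F) * B.
Proof.
  induction F as [|k0 F IH]; intros l Hl HF Hin Hb.
  - destruct l as [|x l]; simpl. lra. exfalso. apply (Hin x). simpl; auto.
  - set (f := fun x => if dK (pi x) k0 then true else false).
    rewrite (filter_split_length f l). rewrite plus_INR.
    assert (H1 : INR (length (filter f l)) <= B).
    { apply (Hb k0); [simpl; auto| apply NoDup_filter; auto|].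
      intros x Hx. apply filter_In in Hx as [Hx1 Hx2]. split; auto.
      unfold f in Hx2. destruct (dK (pi x) k0); auto; discriminate. }
    assert (H0 : 0 <= B).
    { apply (Hb k0 (or_introl eq_refl) nil). constructor. intros x [] . }
    inversion HF; subst.
    assert (H2 : INR (length (filter (fun x => negb (f x)) l)) <= INR (length F) * B).
    { apply IH; auto.
      - apply NoDup_filter; auto.
      - intros x Hx. apply filter_In in Hx as [Hx1 Hx2].
        unfold f in Hx2. destruct (dK (pi x) k0); simpl in Hx2; try discriminate.
        destruct (Hin x Hx1); auto. congruence.
      - intros k Hk l' Hl' Hx. apply (Hb k); simpl; auto.
        intros x Hx'. destruct (Hx x Hx') as [Hx1 Hx2]. apply filter_In in Hx1. tauto. }
    simpl length. rewrite S_INR. lra.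
Qed.

Lemma exists_min_Z (T : list Z) : T <> nil -> exists t0, In t0 T /\ forall t, In t T -> (t0 <= t)%Z.
Proof.
  induction T as [|x T IH]; intros H; [congruence|].
  destruct T as [|y T'].
  - exists x; split; simpl; auto. intros t [->|[]]; lia.
  - destruct IH as [t0 [H1 H2]]; [discriminate|].
    destruct (Z_le_gt_dec x t0).
    + exists x; split; simpl; auto. intros t [->|Ht]; [lia|]. specialize (H2 t Ht); lia.
    + exists t0; split; simpl; auto. intros t [->|Ht]; [lia|]. auto.
Qed.

Lemma count_Z_pairwise (T : list Z) (L : R) : 0 <= L -> NoDup T ->
  (forall t1 t2, In t1 T -> In t2 T -> IZR t2 - IZR t1 <= L) -> INR (length T) <= L + 1.
Proof.
  intros HL HT Hp.
  destruct T as [|x T']; [simpl; lra|].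
  destruct (exists_min_Z (x :: T')) as [t0 [Ht0 Hmin]]; [discriminate|].
  set (T := x :: T') in *.
  set (k := Int_part L).
  destruct (base_Int_part L) as [Hk1 Hk2]. fold k in Hk1, Hk2.
  assert (Hk0 : (0 <= k)%Z).
  { apply le_IZR. destruct (Rle_or_lt 0 (IZR k)); auto. 
    assert (IZR k <= -1). { assert (k < 0)%Z by (apply lt_IZR; auto). apply IZR_le. lia. } lra. }
  assert (Hincl : incl (map (fun t => Z.to_nat (t - t0)) T) (seq 0 (S (Z.to_nat k)))).
  { intros n Hn. apply in_map_iff in Hn as [t [<- Ht]]. apply in_seq.
    specialize (Hmin t Ht). specialize (Hp t0 t Ht0 Ht).
    assert (t - t0 < k + 1)%Z. { apply lt_IZR. rewrite plus_IZR, minus_IZR. simpl. lra. }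
    lia. }
  apply NoDup_incl_length in Hincl.
  - rewrite length_map, length_seq in Hincl.
    apply le_INR in Hincl. rewrite S_INR in Hincl. rewrite (INR_IZR_INZ (Z.to_nat k)) in Hincl. rewrite Z2Nat.id in Hincl by lia. lra.
  - apply NoDup_map_inj_on; auto. intros a b Ha Hb E.
    pose proof (Hmin a Ha); pose proof (Hmin b Hb). lia.
Qed.

Lemma count_Z_interval (T : list Z) (lo L : R) : 0 <= L -> NoDup T ->
  (forall t, In t T -> lo <= IZR t <= lo + L) -> INR (length T) <= L + 1.
Proof.
  intros HL HT H. apply count_Z_pairwise; auto.
  intros t1 t2 H1 H2. apply H in H1; apply H in H2. lra.
Qed.

Lemma Rabs_le_between x b : Rabs x <= b -> -b <= x <= b.
Proof. unfold Rabs; destruct (Rcase_abs x); intros; lra. Qed.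

Section DCL.
Variable h : Z -> R.
Hypothesis Hconv : forall t, h (t+1)%Z - h t <= h (t+2)%Z - h (t+1)%Z.
Let D t := h (t+1)%Z - h t.

Lemma D_mono : forall t k, D t <= D (t + Z.of_nat k)%Z.
Proof.
  intros t k; induction k as [|k IH].
  - rewrite Z.add_0_r; lra.
  - rewrite Nat2Z.inj_succ. unfold D in *.
    specialize (Hconv (t + Z.of_nat k)%Z).
    replace (t + Z.succ (Z.of_nat k) + 1)%Z with (t + Z.of_nat k + 2)%Z by lia.
    replace (t + Z.succ (Z.of_nat k))%Z with (t + Z.of_nat k + 1)%Z by lia. lra.
Qed.

Lemma h_lower : forall t k, INR k * D t <= h (t + Z.of_nat k)%Z - h t.
Proof.
  intros t k; induction k as [|k IH].
  - simpl. rewrite Z.add_0_r; lra.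
  - rewrite S_INR, Nat2Z.inj_succ. pose proof (D_mono t k). unfold D in *.
    replace (t + Z.succ (Z.of_nat k))%Z with (t + Z.of_nat k + 1)%Z by lia. lra.
Qed.

Lemma h_upper : forall t k, h (t + Z.of_nat k)%Z - h t <= INR k * D (t + Z.of_nat k)%Z.
Proof.
  intros t k; induction k as [|k IH].
  - simpl. rewrite Z.add_0_r; lra.
  - rewrite S_INR, Nat2Z.inj_succ.
    pose proof (D_mono (t + Z.of_nat k)%Z 1) as M. simpl Z.of_nat in M.
    pose proof (pos_INR k). unfold D in *.
    replace (t + Z.succ (Z.of_nat k))%Z with (t + Z.of_nat k + 1)%Z by lia.
    assert (INR k * (h (t + Z.of_nat k + 1)%Z - h (t + Z.of_nat k)%Z) <=
            INR k * (h (t + Z.of_nat k + 1 + 1)%Z - h (t + Z.of_nat k + 1)%Z)).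
    { apply Rmult_le_compat_l; auto. }
    lra.
Qed.

Lemma DCL (T : list Z) (W g : R) : 0 < g -> 0 <= W -> NoDup T ->
  (forall t, In t T -> Rabs (h t) <= W /\ g <= Rabs (h (t+1)%Z - h t)) ->
  INR (length T) <= 2 * (2 * W / g + 1).
Proof.
  intros Hg HW HT Hp.
  set (f := fun t => if Rle_dec g (h (t+1)%Z - h t) then true else false).
  rewrite (filter_split_length f T), plus_INR.
  assert (HL : 0 <= 2 * W / g) by (apply Rmult_le_pos; [lra| left; apply Rinv_0_lt_compat; lra]).
  assert (Key : forall t1 t2 : Z, (t1 < t2)%Z -> Rabs (h t1) <= W -> Rabs (h t2) <= W ->
     IZR (t2 - t1) * g <= Rabs (h t2 - h t1) -> IZR t2 - IZR t1 <= 2 * W / g).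
  { intros t1 t2 Hlt H1 H2 H3. rewrite minus_IZR in H3.
    apply Rmult_le_reg_r with g; auto. unfold Rdiv. rewrite Rmult_assoc, Rinv_l by lra.
    apply Rabs_le_between in H1; apply Rabs_le_between in H2.
    assert (Rabs (h t2 - h t1) <= 2 * W) by (apply Rabs_le; lra). lra. }
  replace (2 * (2 * W / g + 1)) with ((2 * W / g + 1) + (2 * W / g + 1)) by ring.
  apply Rplus_le_compat.
  - apply count_Z_pairwise; auto. apply NoDup_filter; auto.
    intros t1 t2 H1 H2. apply filter_In in H1 as [H1 F1]. apply filter_In in H2 as [H2 F2].
    destruct (Z_lt_ge_dec t1 t2) as [Hlt|Hge].
    + apply (Key t1 t2 Hlt); [apply Hp; auto|apply Hp; auto|].
      unfold f in F1. destruct (Rle_dec g (h (t1 + 1)%Z - h t1)) as [G|]; try discriminate.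
      pose proof (h_lower t1 (Z.to_nat (t2 - t1))) as HL1.
      rewrite Z2Nat.id in HL1 by lia. replace (t1 + (t2 - t1))%Z with t2 in HL1 by lia.
      rewrite INR_IZR_INZ, Z2Nat.id in HL1 by lia. unfold D in HL1.
      assert (0 <= IZR (t2 - t1)) by (apply IZR_le; lia).
      assert (IZR (t2 - t1) * g <= IZR (t2 - t1) * (h (t1 + 1)%Z - h t1)) by (apply Rmult_le_compat_l; auto).
      apply Rle_trans with (h t2 - h t1); [lra|apply Rle_abs].
    + assert (IZR t2 <= IZR t1) by (apply IZR_le; lia). lra.
  - apply count_Z_pairwise; auto. apply NoDup_filter; auto.
    intros t1 t2 H1 H2. apply filter_In in H1 as [H1 F1]. apply filter_In in H2 as [H2 F2].
    destruct (Z_lt_ge_dec t1 t2) as [Hlt|Hge].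
    + apply (Key t1 t2 Hlt); [apply Hp; auto|apply Hp; auto|].
      unfold f in F2. destruct (Rle_dec g (h (t2 + 1)%Z - h t2)) as [|G]; try discriminate.
      destruct (Hp t2 H2) as [_ G2].
      assert (G3 : h (t2 + 1)%Z - h t2 <= - g).
      { apply Rnot_le_lt in G. destruct (Rle_or_lt 0 (h (t2 + 1)%Z - h t2)).
        rewrite Rabs_right in G2; lra. rewrite Rabs_left in G2; lra. }
      pose proof (h_upper t1 (Z.to_nat (t2 - t1))) as HL1.
      rewrite Z2Nat.id in HL1 by lia. replace (t1 + (t2 - t1))%Z with t2 in HL1 by lia.
      rewrite INR_IZR_INZ, Z2Nat.id in HL1 by lia. unfold D in HL1.
      assert (0 <= IZR (t2 - t1)) by (apply IZR_le; lia).
      assert (IZR (t2 - t1) * (h (t2 + 1)%Z - h t2) <= IZR (t2 - t1) * (-g)) by (apply Rmult_le_compat_l; auto).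
      rewrite <- Rabs_Ropp; apply Rle_trans with (-(h t2 - h t1)); [lra|apply Rle_abs].
    + assert (IZR t2 <= IZR t1) by (apply IZR_le; lia). lra.
Qed.
End DCL.

Definition Zrange (r : Z) : list Z := map (fun k => (Z.of_nat k - r)%Z) (seq 0 (Z.to_nat (2*r+1))).

Lemma Zrange_In r t : (0 <= r)%Z -> (In t (Zrange r) <-> (- r <= t <= r)%Z).
Proof.
  intros Hr. unfold Zrange. rewrite in_map_iff. split.
  - intros [k [<- Hk]]. apply in_seq in Hk. lia.
  - intros Ht. exists (Z.to_nat (t + r)). split; [lia|]. apply in_seq. lia.
Qed.

Lemma Zrange_NoDup r : NoDup (Zrange r).
Proof.
  unfold Zrange. apply NoDup_map_inj_on; [apply seq_NoDup|]. intros; lia.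
Qed.

Lemma Zrange_length r : (0 <= r)%Z -> INR (length (Zrange r)) = 2 * IZR r + 1.
Proof.
  intros Hr. unfold Zrange. rewrite length_map, length_seq, INR_IZR_INZ, Z2Nat.id by lia.
  rewrite plus_IZR, mult_IZR. simpl. ring.
Qed.

Definition c1 (n : Z3) : Z := fst (fst n).
Definition c2 (n : Z3) : Z := snd (fst n).
Definition c3 (n : Z3) : Z := snd n.

Lemma lines3 (r : Z) (B : R) (l : list Z3) : (0 <= r)%Z -> NoDup l ->
  (forall n, In n l -> (Z.abs (c1 n) <= r /\ Z.abs (c2 n) <= r)%Z) ->
  (forall x y (T : list Z), NoDup T -> (forall t, In t T -> In ((x, y), t) l) -> INR (length T) <= B) ->
  INR (length l) <= (2 * IZR r + 1) ^ 2 * B.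
Proof.
  intros Hr Hl Hbox HB.
  replace ((2 * IZR r + 1) ^ 2 * B) with (INR (length (Zrange r)) * ((2 * IZR r + 1) * B))
    by (rewrite Zrange_length; auto; ring).
  apply (count_fibers Z.eq_dec c1); auto using Zrange_NoDup.
  - intros n Hn. apply Zrange_In; auto. specialize (Hbox n Hn). lia.
  - intros x Hx l' Hl' Hx'. rewrite <- (Zrange_length r) by auto.
    apply (count_fibers Z.eq_dec c2); auto using Zrange_NoDup.
    + intros n Hn. apply Zrange_In; auto. destruct (Hx' n Hn) as [Hn' _]. specialize (Hbox n Hn'). lia.
    + intros y Hy l'' Hl'' Hx''. 
      assert (E : forall n, In n l'' -> n = ((x, y), c3 n)).
      { intros n Hn. destruct (Hx'' n Hn) as [Hn1 Hn2]. destruct (Hx' n Hn1) as [_ Hn3].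
        destruct n as [[a b] c]. unfold c1, c2, c3 in *. simpl in *. congruence. }
      replace (length l'') with (length (map c3 l'')) by apply length_map.
      apply (HB x y).
      * apply NoDup_map_inj_on; auto. intros p q Hp Hq Epq. rewrite (E p Hp), (E q Hq). congruence.
      * intros t Ht. apply in_map_iff in Ht as [n [<- Hn]]. rewrite <- (E n Hn).
        destruct (Hx'' n Hn) as [Hn1 _]. destruct (Hx' n Hn1); auto.
Qed.

Lemma planes3 (r : Z) (B : R) (l : list Z3) : (0 <= r)%Z -> NoDup l ->
  (forall n, In n l -> (Z.abs (c3 n) <= r)%Z) ->
  (forall z (P : list (Z * Z)), NoDup P -> (forall p, In p P -> In (p, z) l) -> INR (length P) <= B) ->
  INR (length l) <= (2 * IZR r + 1) * B.
Proof.
  intros Hr Hl Hbox HB. rewrite <- (Zrange_length r) by auto.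
  apply (count_fibers Z.eq_dec c3); auto using Zrange_NoDup.
  - intros n Hn. apply Zrange_In; auto. specialize (Hbox n Hn). lia.
  - intros z Hz l' Hl' Hx.
    assert (E : forall n, In n l' -> n = (fst n, z)).
    { intros n Hn. destruct (Hx n Hn) as [_ H]. destruct n; unfold c3 in H; simpl in *; congruence. }
    replace (length l') with (length (map (@fst (Z*Z) Z) l')) by apply length_map.
    apply (HB z).
    + apply NoDup_map_inj_on; auto. intros p q Hp Hq Epq. rewrite (E p Hp), (E q Hq). congruence.
    + intros p Hp. apply in_map_iff in Hp as [n [<- Hn]]. rewrite <- (E n Hn). apply Hx; auto.
Qed.

Lemma lines2 (F : list Z) (B : R) (P : list (Z * Z)) : NoDup P -> NoDup F ->
  (forall p, In p P -> In (snd p) F) ->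
  (forall y (T : list Z), NoDup T -> (forall t, In t T -> In (t, y) P) -> INR (length T) <= B) ->
  INR (length P) <= INR (length F) * B.
Proof.
  intros HP HF Hin HB.
  apply (count_fibers Z.eq_dec snd); auto.
  intros y Hy l' Hl' Hx.
  assert (E : forall p, In p l' -> p = (fst p, y)).
  { intros p Hp. destruct (Hx p Hp) as [_ H]. destruct p; simpl in *; congruence. }
  replace (length l') with (length (map (@fst Z Z) l')) by apply length_map.
  apply (HB y).
  - apply NoDup_map_inj_on; auto. intros p q Hp Hq Epq. rewrite (E p Hp), (E q Hq). congruence.
  - intros t Ht. apply in_map_iff in Ht as [p [<- Hp]]. rewrite <- (E p Hp). apply Hx; auto.
Qed.

Lemma box3 (r : Z) (l : list Z3) : (0 <= r)%Z -> NoDup l ->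
  (forall n, In n l -> (Z.abs (c1 n) <= r /\ Z.abs (c2 n) <= r /\ Z.abs (c3 n) <= r)%Z) ->
  INR (length l) <= (2 * IZR r + 1) ^ 3.
Proof.
  intros Hr Hl Hb.
  replace ((2 * IZR r + 1) ^ 3) with ((2 * IZR r + 1) ^ 2 * (2 * IZR r + 1)) by ring.
  apply lines3; auto.
  - intros n Hn; specialize (Hb n Hn); lia.
  - intros x y T HT HTl.
    replace (2 * IZR r + 1) with (2 * IZR r + 1) by ring.
    apply count_Z_interval with (lo := - IZR r); auto.
    + assert (0 <= IZR r) by (apply IZR_le; auto). lra.
    + intros t Ht. specialize (Hb _ (HTl t Ht)). unfold c3 in Hb; simpl in Hb.
      assert (IZR (- r) <= IZR t) by (apply IZR_le; lia).
      assert (IZR t <= IZR r) by (apply IZR_le; lia). rewrite opp_IZR in *. lra.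
Qed.

Definition Fq (b1 b2 k z : R) (x : Z * Z) : R :=
  IZR (fst x) ^ 2 + IZR (snd x) ^ 2 + z - (b1 * IZR (fst x) + b2 * IZR (snd x) + k) ^ 2.

Lemma Fq_convex b1 b2 k z y : b1 ^ 2 <= 1 -> forall t,
  Fq b1 b2 k z ((t + 1)%Z, y) - Fq b1 b2 k z (t, y) <=
  Fq b1 b2 k z ((t + 2)%Z, y) - Fq b1 b2 k z ((t + 1)%Z, y).
Proof.
  intros Hb t. unfold Fq; simpl fst; simpl snd. rewrite !plus_IZR. simpl IZR. nra.
Qed.

Lemma filter_le_INR {A} (f : A -> bool) l : INR (length (filter f l)) <= INR (length l).
Proof. apply le_INR, filter_length_le. Qed.

Lemma dir1 (b1 b2 k z W s X2 : R) (r : Z) (Q : list (Z * Z)) :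
  8 <= s -> 0 <= W -> b1 ^ 2 <= 1 -> (0 <= r)%Z -> NoDup Q ->
  (forall x, In x Q -> (Z.abs (fst x) <= r)%Z /\ (Z.abs (snd x) <= r)%Z /\
      Rabs (IZR (snd x) - X2) <= 2 * s /\ Rabs (Fq b1 b2 k z x) <= W /\
      s / 8 <= Rabs (Fq b1 b2 k z ((fst x + 1)%Z, snd x) - Fq b1 b2 k z x)) ->
  INR (length Q) <= 132 * W + 4 * IZR r + 2.
Proof.
  intros Hs HW Hb Hr HQ Hp.
  set (F := filter (fun y => if Rle_dec (Rabs (IZR y - X2)) (2 * s) then true else false) (Zrange r)).
  assert (H1 : INR (length Q) <= INR (length F) * (2 * (2 * W / (s / 8) + 1))).
  { apply lines2.
    - auto.
    - apply NoDup_filter, Zrange_NoDup.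
    - intros x Hx. destruct (Hp x Hx) as [_ [H2 [H3 _]]]. apply filter_In. split.
      + apply Zrange_In; auto. lia.
      + destruct (Rle_dec _ _); auto.
    - intros y T HT HTQ. apply (DCL (fun t => Fq b1 b2 k z (t, y))).
      + intros t. apply Fq_convex; auto.
      + lra.
      + auto.
      + auto.
      + intros t Ht. destruct (Hp _ (HTQ t Ht)) as [_ [_ [_ [H4 H5]]]]. simpl in H4, H5. auto. }
  assert (HF1 : INR (length F) <= 4 * s + 1).
  { apply count_Z_interval with (lo := X2 - 2 * s). lra. apply NoDup_filter, Zrange_NoDup.
    intros y Hy. apply filter_In in Hy as [_ Hy]. destruct (Rle_dec _ _); try discriminate.
    apply Rabs_le_between in r0. lra. }
  assert (HF2 : INR (length F) <= 2 * IZR r + 1).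
  { rewrite <- Zrange_length by auto. apply filter_le_INR. }
  assert (E : 2 * (2 * W / (s / 8) + 1) = 32 * W / s + 2) by (field; lra).
  rewrite E in H1.
  assert (HLF : 0 <= INR (length F)) by apply pos_INR.
  assert (H5 : INR (length F) * (32 * W / s) <= (4 * s + 1) * (32 * W / s)).
  { apply Rmult_le_compat_r; auto. unfold Rdiv. apply Rmult_le_pos; [lra|]. left; apply Rinv_0_lt_compat; lra. }
  assert (H6 : (4 * s + 1) * (32 * W / s) = 128 * W + 32 * W / s) by (field; lra).
  assert (H7 : 32 * W / s <= 4 * W).
  { apply Rmult_le_reg_r with s; [lra|]. unfold Rdiv. rewrite Rmult_assoc, Rinv_l by lra. nra. }
  nra.
Qed.

Lemma sq_le_between a rho : 0 <= rho -> a ^ 2 <= rho ^ 2 -> - rho <= a <= rho.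
Proof. intros; split; nra. Qed.

Definition swap2 (x : Z * Z) : Z * Z := (snd x, fst x).

Lemma plane (b1 b2 k z W : R) (r : Z) (P : list (Z * Z)) :
  b1 ^ 2 + b2 ^ 2 <= 3 / 4 -> 0 <= W -> (0 <= r)%Z -> NoDup P ->
  (forall x, In x P -> (Z.abs (fst x) <= r)%Z /\ (Z.abs (snd x) <= r)%Z /\
      Rabs (Fq b1 b2 k z x) <= W) ->
  INR (length P) <= 2100 * (W + IZR r + 1).
Proof.
  intros Hb HW Hr HP Hp.
  assert (Hr' : 0 <= IZR r) by (apply IZR_le; auto).
  set (d := 1 - b1 ^ 2 - b2 ^ 2).
  assert (Hd : 1/4 <= d) by (unfold d; lra).
  set (X1 := k * b1 / d). set (X2 := k * b2 / d). set (qs := z - k ^ 2 / d).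
  set (T := W - qs) in *.
  assert (Ident : forall a c, Fq b1 b2 k z (a, c) =
     (IZR a - X1) ^ 2 + (IZR c - X2) ^ 2 - (b1 * (IZR a - X1) + b2 * (IZR c - X2)) ^ 2 + qs).
  { intros a c. unfold Fq, X1, X2, qs, d. simpl. field. fold d. lra. }
  assert (Hdeq : d = 1 - b1 ^ 2 - b2 ^ 2) by reflexivity.
  assert (HTeq : T = W - qs) by reflexivity. clearbody T X1 X2 qs d.
  assert (PF : forall x, In x P ->
     d * ((IZR (fst x) - X1) ^ 2 + (IZR (snd x) - X2) ^ 2) <= T /\
     T - 2 * W <= (IZR (fst x) - X1) ^ 2 + (IZR (snd x) - X2) ^ 2).
  { intros [a c] Hx. destruct (Hp _ Hx) as [_ [_ H]]. rewrite Ident in H.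
    apply Rabs_le_between in H. simpl.
    set (w1 := IZR a - X1) in *. set (w2 := IZR c - X2) in *. clearbody w1 w2.
    assert (E1 : d * (w1 ^ 2 + w2 ^ 2) <= w1 ^ 2 + w2 ^ 2 - (b1 * w1 + b2 * w2) ^ 2).
    { assert (0 <= (b1 * w2 - b2 * w1) ^ 2) by apply pow2_ge_0.
      assert (w1 ^ 2 + w2 ^ 2 - (b1 * w1 + b2 * w2) ^ 2 - d * (w1 ^ 2 + w2 ^ 2) = (b1 * w2 - b2 * w1) ^ 2)
        by (rewrite Hdeq; ring). lra. }
    assert (E2 : 0 <= (b1 * w1 + b2 * w2) ^ 2) by apply pow2_ge_0.
    split; lra. }
  destruct (Rle_or_lt T (16 * W + 64)) as [Tsmall|Tbig].
  -
    set (rho := sqrt (64 * W + 256)).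
    assert (Hrho : rho ^ 2 = 64 * W + 256) by (unfold rho; rewrite <- Rsqr_pow2, Rsqr_sqrt; [ring|lra]).
    assert (Hrho0 : 0 <= rho) by apply sqrt_pos. clearbody rho.
    assert (Bd : forall x, In x P -> - rho <= IZR (fst x) - X1 <= rho /\ - rho <= IZR (snd x) - X2 <= rho).
    { intros x Hx. destruct (PF x Hx) as [H1 _].
      set (w1 := IZR (fst x) - X1) in *. set (w2 := IZR (snd x) - X2) in *. clearbody w1 w2.
      assert (0 <= w1 ^ 2) by apply pow2_ge_0. assert (0 <= w2 ^ 2) by apply pow2_ge_0.
      split; apply sq_le_between; auto; nra. }
    set (F := filter (fun y => if Rle_dec (Rabs (IZR y - X2)) rho then true else false) (Zrange r)).
    assert (H1 : INR (length P) <= INR (length F) * (2 * rho + 1)).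
    { apply lines2; auto.
      - apply NoDup_filter, Zrange_NoDup.
      - intros x Hx. destruct (Hp x Hx) as [_ [H2 _]]. apply filter_In. split.
        + apply Zrange_In; auto. lia.
        + destruct (Rle_dec _ _) as [|n]; auto. exfalso; apply n. apply Rabs_le. apply Bd; auto.
      - intros y T0 HT HTQ. apply count_Z_interval with (lo := X1 - rho); [lra|auto|].
        intros t Ht. destruct (Bd _ (HTQ t Ht)) as [B1 _]. simpl in B1. lra. }
    assert (HF1 : INR (length F) <= 2 * rho + 1).
    { apply count_Z_interval with (lo := X2 - rho). lra. apply NoDup_filter, Zrange_NoDup.
      intros y Hy. apply filter_In in Hy as [_ Hy]. destruct (Rle_dec _ _); try discriminate.
      apply Rabs_le_between in r0. lra. }
    assert (0 <= INR (length F)) by apply pos_INR.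
    assert (INR (length F) * (2 * rho + 1) <= (2 * rho + 1) * (2 * rho + 1)) by (apply Rmult_le_compat_r; lra).
    nra.
  -
    assert (HT64 : 64 <= T) by lra.
    set (s := sqrt T).
    assert (Hs2 : s ^ 2 = T) by (unfold s; rewrite <- Rsqr_pow2, Rsqr_sqrt; [ring|lra]).
    assert (Hs0 : 0 <= s) by apply sqrt_pos. clearbody s.
    assert (Hs8 : 8 <= s) by nra.
    assert (GF : forall x, In x P ->
       ((IZR (fst x) - X1) - (b1 * (IZR (fst x) - X1) + b2 * (IZR (snd x) - X2)) * b1) ^ 2 +
       ((IZR (snd x) - X2) - (b1 * (IZR (fst x) - X1) + b2 * (IZR (snd x) - X2)) * b2) ^ 2 >= s ^ 2 / 32).
    { intros x Hx. destruct (PF x Hx) as [H1 H2].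
      set (w1 := IZR (fst x) - X1) in *. set (w2 := IZR (snd x) - X2) in *. clearbody w1 w2.
      set (p := b1 * w1 + b2 * w2).
      assert (E : (w1 - p * b1) ^ 2 + (w2 - p * b2) ^ 2 - d ^ 2 * (w1 ^ 2 + w2 ^ 2) =
                  (2 - b1 ^ 2 - b2 ^ 2) * (b1 * w2 - b2 * w1) ^ 2) by (unfold p; rewrite Hdeq; ring). clearbody p.
      assert (0 <= (2 - b1 ^ 2 - b2 ^ 2) * (b1 * w2 - b2 * w1) ^ 2).
      { apply Rmult_le_pos; [lra|]. apply pow2_ge_0. }
      assert (T / 2 <= w1 ^ 2 + w2 ^ 2) by lra.
      assert (d ^ 2 * (w1 ^ 2 + w2 ^ 2) >= (1/16) * (T / 2)) by (assert (d ^ 2 >= 1/16) by nra; assert (0 <= T) by lra; nra).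
      lra. }
    assert (D1 : forall a c, Fq b1 b2 k z ((a + 1)%Z, c) - Fq b1 b2 k z (a, c) =
       2 * ((IZR a - X1) - (b1 * (IZR a - X1) + b2 * (IZR c - X2)) * b1) + 1 - b1 ^ 2).
    { intros a c. rewrite !Ident, plus_IZR. ring. }
    assert (D2 : forall a c, Fq b1 b2 k z (a, (c + 1)%Z) - Fq b1 b2 k z (a, c) =
       2 * ((IZR c - X2) - (b1 * (IZR a - X1) + b2 * (IZR c - X2)) * b2) + 1 - b2 ^ 2).
    { intros a c. rewrite !Ident, plus_IZR. ring. }
    set (f := fun x : Z * Z => if Rle_dec (s / 8) (Rabs (Fq b1 b2 k z ((fst x + 1)%Z, snd x) - Fq b1 b2 k z x)) then true else false).
    rewrite (filter_split_length f P), plus_INR.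
    assert (Bw : forall x, In x P -> Rabs (IZR (fst x) - X1) <= 2 * s /\ Rabs (IZR (snd x) - X2) <= 2 * s).
    { intros x Hx. destruct (PF x Hx) as [H1 _].
      set (w1 := IZR (fst x) - X1) in *. set (w2 := IZR (snd x) - X2) in *. clearbody w1 w2.
      assert (0 <= w1 ^ 2) by apply pow2_ge_0. assert (0 <= w2 ^ 2) by apply pow2_ge_0.
      split; apply Rabs_le, sq_le_between; nra. }
    assert (HA : INR (length (filter f P)) <= 132 * W + 4 * IZR r + 2).
    { apply (dir1 b1 b2 k z W s X2 r); auto; [nra| apply NoDup_filter; auto|].
      intros x Hx. apply filter_In in Hx as [Hx Hf]. destruct (Hp x Hx) as [H1 [H2 H3]].
      repeat split; auto. apply Bw; auto.
      unfold f in Hf. destruct (Rle_dec _ _); auto; discriminate. }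
    assert (HB : INR (length (filter (fun x => negb (f x)) P)) <= 132 * W + 4 * IZR r + 2).
    { rewrite <- (length_map swap2).
      apply (dir1 b2 b1 k z W s X1 r); auto; [nra| |].
      - apply NoDup_map_inj_on; [apply NoDup_filter; auto|].
        intros [a b] [c e] _ _ E. unfold swap2 in E; simpl in E. congruence.
      - intros x' Hx'. apply in_map_iff in Hx' as [x [<- Hx]].
        apply filter_In in Hx as [Hx Hf]. destruct (Hp x Hx) as [H1 [H2 H3]].
        destruct x as [a c]. unfold swap2; simpl fst; simpl snd in *.
        assert (Sw : forall a' c', Fq b2 b1 k z (c', a') = Fq b1 b2 k z (a', c')) by (intros; unfold Fq; simpl; ring).
        rewrite !Sw. repeat split; auto. apply (Bw (a, c) Hx).
        unfold f in Hf. simpl in Hf. destruct (Rle_dec _ _) as [|Hn]; try discriminate.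
        apply Rnot_le_lt in Hn. rewrite D1 in Hn. rewrite D2.
        specialize (GF (a, c) Hx). simpl in GF.
        set (w1 := IZR a - X1) in *. set (w2 := IZR c - X2) in *.
        set (g1 := w1 - (b1 * w1 + b2 * w2) * b1) in *. set (g2 := w2 - (b1 * w1 + b2 * w2) * b2) in *.
        apply Rabs_def2 in Hn. destruct Hn as [Hn1 Hn2].
        clearbody w1 w2 g1 g2.
        assert (Hb1 : 0 <= b1 ^ 2 <= 1) by (split; [apply pow2_ge_0|]; assert (0 <= b2 ^ 2) by apply pow2_ge_0; lra).
        assert (Hb2 : 0 <= b2 ^ 2 <= 1) by (split; [apply pow2_ge_0|]; assert (0 <= b1 ^ 2) by apply pow2_ge_0; lra).
        assert (G0 : - (s / 8) <= g1 <= s / 8) by lra.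
        assert (G1 : g1 ^ 2 <= s ^ 2 / 64) by nra.
        assert (G2 : g2 ^ 2 >= s ^ 2 / 64) by lra.
        destruct (Rle_or_lt 0 g2) as [Hg|Hg].
        + assert (s / 8 <= g2) by nra.
          rewrite Rabs_right; lra.
        + assert (g2 <= - (s / 8)) by nra.
          rewrite Rabs_left; lra. }
    lra.
Qed.

Ltac sq x := let H := fresh "SQ" in assert (H : 0 <= x ^ 2) by apply pow2_ge_0.

Lemma sqrt_facts X : 0 <= X -> 0 <= sqrt X /\ sqrt X ^ 2 = X.
Proof. intros H. split. apply sqrt_pos. rewrite <- Rsqr_pow2, Rsqr_sqrt; auto. Qed.

Lemma sqrt_facts2 rho e : 0 <= rho -> 0 <= sqrt (rho + e ^ 2) /\ sqrt (rho + e ^ 2) ^ 2 = rho + e ^ 2.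
Proof. intros. apply sqrt_facts. sq e. lra. Qed.

Lemma sq_le_le p q : 0 <= q -> p ^ 2 <= q ^ 2 -> p <= q.
Proof. intros. nra. Qed.

Lemma sqrt_convex rho t : 0 <= rho ->
  2 * sqrt (rho + (t + 1) ^ 2) <= sqrt (rho + t ^ 2) + sqrt (rho + (t + 2) ^ 2).
Proof.
  intros Hr.
  destruct (sqrt_facts2 rho t ltac:(lra)) as [HA1 HA2].
  destruct (sqrt_facts2 rho (t+1) ltac:(lra)) as [HB1 HB2].
  destruct (sqrt_facts2 rho (t+2) ltac:(lra)) as [HC1 HC2].
  set (A := sqrt (rho + t ^ 2)) in *. set (B := sqrt (rho + (t+1) ^ 2)) in *.
  set (C := sqrt (rho + (t+2) ^ 2)) in *. clearbody A B C.
  assert (HAC : rho + t * (t + 2) <= A * C).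
  { apply sq_le_le; [nra|]. replace ((A * C) ^ 2) with (A ^ 2 * C ^ 2) by ring.
    rewrite HA2, HC2. nra. }
  apply sq_le_le; [nra|]. nra.
Qed.

Lemma sqrt_lip rho x y : 0 <= rho ->
  Rabs (sqrt (rho + x ^ 2) - sqrt (rho + y ^ 2)) <= Rabs (x - y).
Proof.
  intros Hr.
  destruct (sqrt_facts2 rho x ltac:(lra)) as [HA1 HA2].
  destruct (sqrt_facts2 rho y ltac:(lra)) as [HB1 HB2].
  set (A := sqrt (rho + x ^ 2)) in *. set (B := sqrt (rho + y ^ 2)) in *. clearbody A B.
  assert (HAB : rho + x * y <= A * B).
  { apply sq_le_le; [nra|]. replace ((A * B) ^ 2) with (A ^ 2 * B ^ 2) by ring.
    rewrite HA2, HB2. assert (0 <= rho * (x - y) ^ 2) by (apply Rmult_le_pos; [lra|apply pow2_ge_0]). nra. }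
  apply Rsqr_le_abs_0. unfold Rsqr. nra.
Qed.

Lemma sqrt_step rho t : 1 <= rho ->
  Rabs (sqrt (rho + (t + 1) ^ 2) - sqrt (rho + t ^ 2)) * sqrt (rho + t ^ 2) <= Rabs t + 1 / 2.
Proof.
  intros Hr.
  destruct (sqrt_facts2 rho t ltac:(lra)) as [HA1 HA2].
  destruct (sqrt_facts2 rho (t+1) ltac:(lra)) as [HB1 HB2].
  set (A := sqrt (rho + t ^ 2)) in *. set (B := sqrt (rho + (t+1) ^ 2)) in *. clearbody A B.
  assert (HA : 1 <= A) by nra.
  assert (E : (B - A) * (B + A) = 2 * t + 1) by nra.
  destruct (Rle_or_lt 0 (2 * t + 1)) as [Ht|Ht].
  - assert (A <= B) by nra.
    rewrite Rabs_right by lra.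
    assert ((B - A) * (2 * A) <= (B - A) * (B + A)) by nra.
    destruct (Rle_or_lt 0 t); [rewrite Rabs_right by lra| rewrite Rabs_left by lra]; nra.
  - assert (B <= A) by nra.
    rewrite Rabs_left1 by lra. rewrite Rabs_left by lra.
    assert (Htl : - A <= t) by nra.
    assert (HB : A - 1 <= B) by (apply sq_le_le; nra).
    assert (P1 : (A - B) * (2 * A - 1) <= (A - B) * (A + B)) by nra.
    assert (P2 : (A - B) * (2 * A - 1) <= - (2 * t + 1)) by nra.
    assert (P3 : (A - B) * A * (2 * A - 1) <= (- t + 1 / 2) * (2 * A - 1)) by nra.
    assert (0 < 2 * A - 1) by lra.
    apply Rmult_le_reg_r with (2 * A - 1); auto. nra.
Qed.

Lemma tri4 x0 x1 x2 x3 y0 y1 y2 y3 :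
  sqrt ((x0+y0)^2 + (x1+y1)^2 + (x2+y2)^2 + (x3+y3)^2) <=
  sqrt (x0^2+x1^2+x2^2+x3^2) + sqrt (y0^2+y1^2+y2^2+y3^2).
Proof.
  sq x0; sq x1; sq x2; sq x3; sq y0; sq y1; sq y2; sq y3.
  destruct (sqrt_facts (x0^2+x1^2+x2^2+x3^2) ltac:(lra)) as [HA1 HA2].
  destruct (sqrt_facts (y0^2+y1^2+y2^2+y3^2) ltac:(lra)) as [HB1 HB2].
  set (A := sqrt (x0^2+x1^2+x2^2+x3^2)) in *. set (B := sqrt (y0^2+y1^2+y2^2+y3^2)) in *.
  clearbody A B.
  assert (CS : x0*y0+x1*y1+x2*y2+x3*y3 <= A * B).
  { apply sq_le_le. apply Rmult_le_pos; auto.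
    replace ((A * B) ^ 2) with (A ^ 2 * B ^ 2) by ring. rewrite HA2, HB2.
    sq (x0*y1-x1*y0); sq (x0*y2-x2*y0); sq (x0*y3-x3*y0); sq (x1*y2-x2*y1); sq (x1*y3-x3*y1); sq (x2*y3-x3*y2).
    nra. }
  rewrite <- (sqrt_pow2 (A + B)) by lra. apply sqrt_le_1_alt. nra.
Qed.

Lemma sqrt_sq_eq X : 0 <= X -> sqrt X ^ 2 = X.
Proof. intros; apply sqrt_facts; auto. Qed.

Section UV.
Variables X Y Z A1 A2 A3 : R.
Let v := sqrt (1 + (X^2 + Y^2 + Z^2)).
Let u := sqrt (1 + ((A1 + X)^2 + (A2 + Y)^2 + (A3 + Z)^2)).
Let al := sqrt (A1^2 + A2^2 + A3^2).

Lemma uv_diff : Rabs (u - v) <= al.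
Proof.
  unfold u, v, al. apply Rabs_le. split.
  - pose proof (tri4 1 (A1+X) (A2+Y) (A3+Z) 0 (-A1) (-A2) (-A3)) as H.
    replace (sqrt ((1 + 0) ^ 2 + (A1 + X + - A1) ^ 2 + (A2 + Y + - A2) ^ 2 + (A3 + Z + - A3) ^ 2))
      with (sqrt (1 + (X ^ 2 + Y ^ 2 + Z ^ 2))) in H by (f_equal; ring).
    replace (sqrt (1 ^ 2 + (A1 + X) ^ 2 + (A2 + Y) ^ 2 + (A3 + Z) ^ 2))
      with (sqrt (1 + ((A1 + X) ^ 2 + (A2 + Y) ^ 2 + (A3 + Z) ^ 2))) in H by (f_equal; ring).
    replace (sqrt (0 ^ 2 + (- A1) ^ 2 + (- A2) ^ 2 + (- A3) ^ 2)) with (sqrt (A1 ^ 2 + A2 ^ 2 + A3 ^ 2)) in H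
      by (f_equal; ring). lra.
  - pose proof (tri4 1 X Y Z 0 A1 A2 A3) as H.
    replace (sqrt ((1 + 0) ^ 2 + (X + A1) ^ 2 + (Y + A2) ^ 2 + (Z + A3) ^ 2))
      with (sqrt (1 + ((A1 + X) ^ 2 + (A2 + Y) ^ 2 + (A3 + Z) ^ 2))) in H by (f_equal; ring).
    replace (sqrt (1 ^ 2 + X ^ 2 + Y ^ 2 + Z ^ 2))
      with (sqrt (1 + (X ^ 2 + Y ^ 2 + Z ^ 2))) in H by (f_equal; ring).
    replace (sqrt (0 ^ 2 + A1 ^ 2 + A2 ^ 2 + A3 ^ 2)) with (sqrt (A1 ^ 2 + A2 ^ 2 + A3 ^ 2)) in H
      by (f_equal; ring). lra.
Qed.

Lemma uv_sum : al <= u + v.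
Proof.
  unfold u, v, al.
  pose proof (tri4 0 (A1+X) (A2+Y) (A3+Z) 0 (-X) (-Y) (-Z)) as H.
  replace (sqrt ((0 + 0) ^ 2 + (A1 + X + - X) ^ 2 + (A2 + Y + - Y) ^ 2 + (A3 + Z + - Z) ^ 2))
    with (sqrt (A1 ^ 2 + A2 ^ 2 + A3 ^ 2)) in H by (f_equal; ring).
  assert (sqrt (0 ^ 2 + (A1 + X) ^ 2 + (A2 + Y) ^ 2 + (A3 + Z) ^ 2) <=
          sqrt (1 + ((A1 + X) ^ 2 + (A2 + Y) ^ 2 + (A3 + Z) ^ 2))).
  { apply sqrt_le_1_alt. lra. }
  assert (sqrt (0 ^ 2 + (- X) ^ 2 + (- Y) ^ 2 + (- Z) ^ 2) <= sqrt (1 + (X ^ 2 + Y ^ 2 + Z ^ 2))).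
  { apply sqrt_le_1_alt. lra. }
  lra.
Qed.

Lemma uv_sq : u ^ 2 - v ^ 2 = 2 * (A1 * X + A2 * Y + A3 * Z) + al ^ 2.
Proof.
  unfold u, v, al. sq X; sq Y; sq Z; sq A1; sq A2; sq A3; sq (A1+X); sq (A2+Y); sq (A3+Z).
  rewrite !sqrt_sq_eq by lra. ring.
Qed.

Lemma v_ge1 : 1 <= v.
Proof. unfold v. apply Rle_trans with (sqrt 1); [rewrite sqrt_1; lra|]. apply sqrt_le_1_alt. sq X; sq Y; sq Z. lra. Qed.

Lemma u_ge1 : 1 <= u.
Proof. unfold u. apply Rle_trans with (sqrt 1); [rewrite sqrt_1; lra|]. apply sqrt_le_1_alt. sq (A1+X); sq (A2+Y); sq (A3+Z). lra. Qed.

Lemma v_le : v <= 1 + Rabs X + Rabs Y + Rabs Z.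
Proof.
  unfold v. apply sq_le_le.
  - pose proof (Rabs_pos X); pose proof (Rabs_pos Y); pose proof (Rabs_pos Z); lra.
  - sq X; sq Y; sq Z. rewrite sqrt_sq_eq by lra.
    rewrite <- (pow2_abs X), <- (pow2_abs Y), <- (pow2_abs Z) at 1.
    pose proof (Rabs_pos X); pose proof (Rabs_pos Y); pose proof (Rabs_pos Z). nra.
Qed.

Lemma v_sq : v ^ 2 = 1 + (X^2 + Y^2 + Z^2).
Proof. unfold v. sq X; sq Y; sq Z. rewrite sqrt_sq_eq by lra. ring. Qed.

End UV.

Definition box (r : Z) (n : Z3) : Prop :=
  (Z.abs (c1 n) <= r /\ Z.abs (c2 n) <= r /\ Z.abs (c3 n) <= r)%Z.

Definition dot (a n : Z3) : R :=
  IZR (c1 a) * IZR (c1 n) + IZR (c2 a) * IZR (c2 n) + IZR (c3 a) * IZR (c3 n).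

Lemma jbr_form n : jbr n = sqrt (1 + (IZR (c1 n) ^ 2 + IZR (c2 n) ^ 2 + IZR (c3 n) ^ 2)).
Proof. destruct n as [[x y] z]. reflexivity. Qed.

Lemma jbr_add_form a n : jbr (z3add a n) = sqrt (1 + ((IZR (c1 a) + IZR (c1 n)) ^ 2 +
   (IZR (c2 a) + IZR (c2 n)) ^ 2 + (IZR (c3 a) + IZR (c3 n)) ^ 2)).
Proof. destruct n as [[x y] z]; destruct a as [[a1 a2] a3]. unfold jbr, nsq, z3add, c1, c2, c3; simpl.
  rewrite !plus_IZR. reflexivity. Qed.

Lemma znorm_form a : znorm a = sqrt (IZR (c1 a) ^ 2 + IZR (c2 a) ^ 2 + IZR (c3 a) ^ 2).
Proof. destruct a as [[x y] z]. reflexivity. Qed.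

Lemma L_diff a n : Rabs (jbr (z3add a n) - jbr n) <= znorm a.
Proof. rewrite jbr_add_form, jbr_form, znorm_form. apply uv_diff. Qed.

Lemma L_sum a n : znorm a <= jbr (z3add a n) + jbr n.
Proof. rewrite jbr_add_form, jbr_form, znorm_form. apply uv_sum. Qed.

Lemma L_sq a n : jbr (z3add a n) ^ 2 - jbr n ^ 2 = 2 * dot a n + znorm a ^ 2.
Proof. rewrite jbr_add_form, jbr_form, znorm_form. unfold dot. apply uv_sq. Qed.

Lemma L_v1 n : 1 <= jbr n.
Proof. rewrite jbr_form. apply v_ge1. Qed.

Lemma L_u1 a n : 1 <= jbr (z3add a n).
Proof. rewrite jbr_add_form. apply u_ge1. Qed.

Lemma L_vsq n : jbr n ^ 2 = 1 + (IZR (c1 n) ^ 2 + IZR (c2 n) ^ 2 + IZR (c3 n) ^ 2).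
Proof. rewrite jbr_form. apply v_sq. Qed.

Lemma abs_IZR_le (k r : Z) : (Z.abs k <= r)%Z -> Rabs (IZR k) <= IZR r.
Proof. intros H. rewrite <- abs_IZR. apply IZR_le. auto. Qed.

Lemma L_vle r n : box r n -> jbr n <= 1 + 3 * IZR r.
Proof.
  intros [H1 [H2 H3]]. rewrite jbr_form. eapply Rle_trans; [apply v_le|].
  apply abs_IZR_le in H1; apply abs_IZR_le in H2; apply abs_IZR_le in H3. lra.
Qed.

Lemma line_lip x y t1 t2 : Rabs (jbr ((x, y), t2) - jbr ((x, y), t1)) <= Rabs (IZR t2 - IZR t1).
Proof.
  unfold jbr, nsq.
  replace (1 + (IZR x ^ 2 + IZR y ^ 2 + IZR t2 ^ 2)) with ((1 + IZR x ^ 2 + IZR y ^ 2) + IZR t2 ^ 2) by ring.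
  replace (1 + (IZR x ^ 2 + IZR y ^ 2 + IZR t1 ^ 2)) with ((1 + IZR x ^ 2 + IZR y ^ 2) + IZR t1 ^ 2) by ring.
  apply sqrt_lip. sq (IZR x); sq (IZR y); lra.
Qed.

Lemma z3add_line a x y t : z3add a ((x, y), t) = ((c1 a + x)%Z, (c2 a + y)%Z, (c3 a + t)%Z).
Proof. destruct a as [[a1 a2] a3]; reflexivity. Qed.

Lemma caseI (a : Z3) (m C0 : R) (r : Z) (l : list Z3) :
  0 <= C0 -> (0 <= r)%Z -> NoDup l -> 4 * m ^ 2 <= IZR (c3 a) ^ 2 -> 0 < IZR (c3 a) ^ 2 ->
  (forall n, In n l -> box r n /\ Rabs (jbr (z3add a n) - jbr n - m) <= C0) ->
  INR (length l) <= (2 * IZR r + 1) ^ 2 *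
     (2 * C0 * (2 * (1 + 3 * IZR r) + znorm a) / Rabs (IZR (c3 a)) + 1).
Proof.
  intros HC0 Hr Hl Hm Ha3 Hp.
  set (S := 2 * (1 + 3 * IZR r) + znorm a).
  set (A3 := IZR (c3 a)) in *.
  assert (HA3 : 0 < Rabs A3).
  { destruct (Req_dec A3 0) as [E|E]. rewrite E in Ha3; lra. apply Rabs_pos_lt; auto. }
  assert (Hmabs : 2 * Rabs m <= Rabs A3).
  { apply sq_le_le. apply Rabs_pos. rewrite <- (pow2_abs A3) in Hm. rewrite <- (pow2_abs m) in Hm. nra. }
  assert (HS : forall n, In n l -> jbr (z3add a n) + jbr n <= S /\
     Rabs (2 * dot a n + znorm a ^ 2 - m * (jbr (z3add a n) + jbr n)) <= C0 * S).
  { intros n Hn. destruct (Hp n Hn) as [Hb Hc].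
    pose proof (L_diff a n) as D. pose proof (L_vle r n Hb) as V. pose proof (L_sq a n) as Q.
    pose proof (L_v1 n). pose proof (L_u1 a n).
    apply Rabs_le_between in D.
    assert (H1 : jbr (z3add a n) + jbr n <= S) by (unfold S; lra).
    split; auto.
    replace (2 * dot a n + znorm a ^ 2 - m * (jbr (z3add a n) + jbr n)) with
      ((jbr (z3add a n) - jbr n - m) * (jbr (z3add a n) + jbr n)) by (rewrite <- Q; ring).
    rewrite Rabs_mult. rewrite (Rabs_right (jbr (z3add a n) + jbr n)) by lra.
    apply Rmult_le_compat; auto using Rabs_pos; lra. }
  apply lines3; auto.
  - intros n Hn. destruct (Hp n Hn) as [[H1 [H2 _]] _]. auto.
  - intros x y T HT HTl. apply count_Z_pairwise; auto.
    + apply Rmult_le_pos; [|left; apply Rinv_0_lt_compat; auto].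
      assert (0 <= S). { unfold S. pose proof (sqrt_pos (nsq a)). unfold znorm. assert (0 <= IZR r) by (apply IZR_le; auto). lra. }
      nra.
    + intros t1 t2 Ht1 Ht2.
      destruct (Z_le_gt_dec t2 t1) as [Hle|Hgt].
      * assert (IZR t2 <= IZR t1) by (apply IZR_le; auto).
        assert (0 <= 2 * C0 * S / Rabs A3).
        { apply Rmult_le_pos; [|left; apply Rinv_0_lt_compat; auto].
          assert (0 <= S). { unfold S. pose proof (sqrt_pos (nsq a)). unfold znorm. assert (0 <= IZR r) by (apply IZR_le; auto). lra. }
          nra. }
        lra.
      * assert (Hd : 0 < IZR t2 - IZR t1) by (assert (IZR t1 < IZR t2) by (apply IZR_lt; lia); lra).
        pose proof (HTl t1 Ht1) as N1. pose proof (HTl t2 Ht2) as N2.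
        destruct (HS _ N1) as [_ P1]. destruct (HS _ N2) as [_ P2].
        pose proof (line_lip x y t1 t2) as Lv.
        pose proof (line_lip (c1 a + x) (c2 a + y) (c3 a + t1) (c3 a + t2)) as Lu.
        rewrite <- !z3add_line in Lu. rewrite !plus_IZR in Lu.
        replace (IZR (c3 a) + IZR t2 - (IZR (c3 a) + IZR t1)) with (IZR t2 - IZR t1) in Lu by ring.
        rewrite (Rabs_right (IZR t2 - IZR t1)) in Lu, Lv by lra.
        set (u1 := jbr (z3add a ((x, y), t1))) in *. set (u2 := jbr (z3add a ((x, y), t2))) in *.
        set (v1 := jbr ((x, y), t1)) in *. set (v2 := jbr ((x, y), t2)) in *.
        assert (Edot : dot a ((x, y), t2) - dot a ((x, y), t1) = A3 * (IZR t2 - IZR t1)).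
        { unfold dot. unfold A3. destruct a as [[a1 a2] a3]. unfold c1, c2, c3; simpl. ring. }
        set (D := IZR t2 - IZR t1) in *.
        set (P := 2 * dot a ((x, y), t2) + znorm a ^ 2 - m * (u2 + v2) -
                 (2 * dot a ((x, y), t1) + znorm a ^ 2 - m * (u1 + v1))).
        assert (EP : P = 2 * A3 * D - m * ((u2 - u1) + (v2 - v1))) by (unfold P; replace (2 * A3 * D) with (2 * (A3 * D)) by ring; rewrite <- Edot; ring).
        assert (HP : Rabs P <= 2 * (C0 * S)).
        { unfold P. eapply Rle_trans; [apply Rabs_triang|]. rewrite Rabs_Ropp. lra. }
        assert (HmP : Rabs (m * ((u2 - u1) + (v2 - v1))) <= Rabs A3 * D).
        { rewrite Rabs_mult. eapply Rle_trans with (Rabs m * (2 * D)).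
          - apply Rmult_le_compat_l; [apply Rabs_pos|].
            eapply Rle_trans; [apply Rabs_triang|]. lra.
          - pose proof (Rabs_pos m). nra. }
        assert (H2A : Rabs (2 * A3 * D) = 2 * Rabs A3 * D).
        { rewrite !Rabs_mult. rewrite (Rabs_right 2) by lra. rewrite (Rabs_right D) by lra. ring. }
        assert (Rabs A3 * D <= 2 * (C0 * S)).
        { pose proof (Rabs_triang_inv (2 * A3 * D) (m * ((u2 - u1) + (v2 - v1)))) as TI.
          rewrite <- EP, H2A in TI. lra. }
        apply Rmult_le_reg_r with (Rabs A3); auto.
        unfold Rdiv. rewrite Rmult_assoc, Rinv_l by lra. lra.
Qed.

Definition lin (b1 b2 b3 c : R) (n : Z3) : R :=
  b1 * IZR (c1 n) + b2 * IZR (c2 n) + b3 * IZR (c3 n) + c.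

Lemma caseP (b1 b2 b3 c W' : R) (r : Z) (l : list Z3) :
  b1 ^ 2 + b2 ^ 2 <= 3 / 4 -> 0 <= W' -> (0 <= r)%Z -> NoDup l ->
  (forall n, In n l -> box r n /\ Rabs (jbr n - lin b1 b2 b3 c n) <= W') ->
  INR (length l) <= (2 * IZR r + 1) * (2100 * (W' * (2 * (1 + 3 * IZR r) + W') + IZR r + 1)).
Proof.
  intros Hb HW Hr Hl Hp.
  assert (Hr' : 0 <= IZR r) by (apply IZR_le; auto).
  apply planes3; auto.
  - intros n Hn. apply (Hp n Hn).
  - intros z P HP HPl. apply (plane b1 b2 (b3 * IZR z + c) (1 + IZR z ^ 2)); auto.
    + apply Rmult_le_pos; auto. lra.
    + intros [x y] Hxy. destruct (Hp _ (HPl _ Hxy)) as [[B1 [B2 B3]] H].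
      cbn [fst snd]. repeat split; auto. unfold Fq; cbn [fst snd].
      pose proof (L_vsq ((x, y), z)) as Vs. pose proof (L_vle r ((x, y), z) (conj B1 (conj B2 B3))) as Vl.
      pose proof (L_v1 ((x, y), z)).
      unfold lin, c1, c2, c3 in *; cbn [fst snd] in *.
      set (v := jbr (x, y, z)) in *. set (L := b1 * IZR x + b2 * IZR y + b3 * IZR z + c) in *.
      replace (IZR x ^ 2 + IZR y ^ 2 + (1 + IZR z ^ 2) - (b1 * IZR x + b2 * IZR y + (b3 * IZR z + c)) ^ 2)
        with ((v - L) * (v + L)) by (replace ((v - L) * (v + L)) with (v ^ 2 - L ^ 2) by ring; rewrite Vs; unfold L; ring).
      rewrite Rabs_mult. apply Rabs_le_between in H as H'.
      apply Rmult_le_compat; auto using Rabs_pos. apply Rabs_le. lra.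
Qed.

Definition e3p (n : Z3) : Z3 := ((c1 n, c2 n), (c3 n + 1)%Z).

Lemma dir3G (b1 b2 b3 c W' g : R) (r : Z) (l : list Z3) :
  0 < g -> 0 <= W' -> (0 <= r)%Z -> NoDup l ->
  (forall n, In n l -> box r n /\ Rabs (jbr n - lin b1 b2 b3 c n) <= W' /\
     g <= Rabs ((jbr (e3p n) - lin b1 b2 b3 c (e3p n)) - (jbr n - lin b1 b2 b3 c n))) ->
  INR (length l) <= (2 * IZR r + 1) ^ 2 * (2 * (2 * W' / g + 1)).
Proof.
  intros Hg HW Hr Hl Hp.
  apply lines3; auto.
  - intros n Hn. destruct (Hp n Hn) as [[B1 [B2 _]] _]; auto.
  - intros x y T HT HTl.
    apply (DCL (fun t => jbr ((x, y), t) - lin b1 b2 b3 c ((x, y), t))); auto.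
    + intros t. unfold lin, c1, c2, c3; simpl. unfold jbr, nsq. rewrite !plus_IZR.
      pose proof (sqrt_convex (1 + IZR x ^ 2 + IZR y ^ 2) (IZR t)) as SC.
      replace (1 + (IZR x ^ 2 + IZR y ^ 2 + (IZR t + 1) ^ 2)) with (1 + IZR x ^ 2 + IZR y ^ 2 + (IZR t + 1) ^ 2) by ring.
      replace (1 + (IZR x ^ 2 + IZR y ^ 2 + (IZR t + 2) ^ 2)) with (1 + IZR x ^ 2 + IZR y ^ 2 + (IZR t + 2) ^ 2) by ring.
      replace (1 + (IZR x ^ 2 + IZR y ^ 2 + IZR t ^ 2)) with (1 + IZR x ^ 2 + IZR y ^ 2 + IZR t ^ 2) by ring.
      simpl IZR. sq (IZR x); sq (IZR y). specialize (SC ltac:(lra)). lra.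
    + intros t Ht. destruct (Hp _ (HTl t Ht)) as [_ [H1 H2]]. split; auto.
Qed.

Lemma cover_real (d1 d2 d3 b1 b2 b3 v X Y Z : R) :
  300 <= v -> v ^ 2 = 1 + (X ^ 2 + Y ^ 2 + Z ^ 2) ->
  Rabs d1 * v <= Rabs X + 1/2 -> Rabs d2 * v <= Rabs Y + 1/2 -> Rabs d3 * v <= Rabs Z + 1/2 ->
  112/100 <= b1 ^ 2 + b2 ^ 2 + b3 ^ 2 ->
  1/40 <= Rabs (d1 - b1) \/ 1/40 <= Rabs (d2 - b2) \/ 1/40 <= Rabs (d3 - b3).
Proof.
  intros Hv Hv2 H1 H2 H3 Hb.
  assert (AX : Rabs X <= v) by (apply sq_le_le; [lra|]; rewrite pow2_abs; sq Y; sq Z; lra).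
  assert (AY : Rabs Y <= v) by (apply sq_le_le; [lra|]; rewrite pow2_abs; sq X; sq Z; lra).
  assert (AZ : Rabs Z <= v) by (apply sq_le_le; [lra|]; rewrite pow2_abs; sq X; sq Y; lra).
  pose proof (Rabs_pos d1); pose proof (Rabs_pos d2); pose proof (Rabs_pos d3).
  pose proof (Rabs_pos X); pose proof (Rabs_pos Y); pose proof (Rabs_pos Z).
  assert (Q1 : (Rabs d1 * v) ^ 2 <= (Rabs X + 1/2) ^ 2) by (apply pow_incr; split; [nra|auto]).
  assert (Q2 : (Rabs d2 * v) ^ 2 <= (Rabs Y + 1/2) ^ 2) by (apply pow_incr; split; [nra|auto]).
  assert (Q3 : (Rabs d3 * v) ^ 2 <= (Rabs Z + 1/2) ^ 2) by (apply pow_incr; split; [nra|auto]).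
  rewrite Rpow_mult_distr, pow2_abs in Q1, Q2, Q3.
  assert (S1 : (d1 ^ 2 + d2 ^ 2 + d3 ^ 2) * v ^ 2 <= v ^ 2 * (101/100)).
  { assert ((Rabs X + 1/2) ^ 2 + (Rabs Y + 1/2) ^ 2 + (Rabs Z + 1/2) ^ 2 =
            X ^ 2 + Y ^ 2 + Z ^ 2 + Rabs X + Rabs Y + Rabs Z + 3/4).
    { replace ((Rabs X + 1/2) ^ 2) with (Rabs X ^ 2 + Rabs X + 1/4) by field.
      replace ((Rabs Y + 1/2) ^ 2) with (Rabs Y ^ 2 + Rabs Y + 1/4) by field.
      replace ((Rabs Z + 1/2) ^ 2) with (Rabs Z ^ 2 + Rabs Z + 1/4) by field.
      rewrite !pow2_abs. field. }
    assert (3 * v <= v ^ 2 / 100) by nra.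
    lra. }
  assert (S2 : d1 ^ 2 + d2 ^ 2 + d3 ^ 2 <= 101/100).
  { apply Rmult_le_reg_r with (v ^ 2); [nra|]. lra. }
  destruct (Rle_or_lt (1/40) (Rabs (d1 - b1))) as [A|A]; [left; auto|].
  destruct (Rle_or_lt (1/40) (Rabs (d2 - b2))) as [B|B]; [right; left; auto|].
  destruct (Rle_or_lt (1/40) (Rabs (d3 - b3))) as [C|C]; [right; right; auto|].
  exfalso.
  assert (A' : (d1 - b1) ^ 2 < 1/1600).
  { rewrite <- pow2_abs. pose proof (Rabs_pos (d1 - b1)). nra. }
  assert (B' : (d2 - b2) ^ 2 < 1/1600).
  { rewrite <- pow2_abs. pose proof (Rabs_pos (d2 - b2)). nra. }
  assert (C' : (d3 - b3) ^ 2 < 1/1600).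
  { rewrite <- pow2_abs. pose proof (Rabs_pos (d3 - b3)). nra. }
  sq (95/100 * b1 - d1); sq (95/100 * b2 - d2); sq (95/100 * b3 - d3).
  lra.
Qed.

Definition e1p (n : Z3) : Z3 := (((c1 n + 1)%Z, c2 n), c3 n).
Definition e2p (n : Z3) : Z3 := ((c1 n, (c2 n + 1)%Z), c3 n).
Definition perm13 (n : Z3) : Z3 := ((c3 n, c2 n), c1 n).
Definition perm23 (n : Z3) : Z3 := ((c1 n, c3 n), c2 n).

Lemma step_gen rho X : 1 <= rho ->
  Rabs (sqrt (rho + (X + 1) ^ 2) - sqrt (rho + X ^ 2)) * sqrt (rho + X ^ 2) <= Rabs X + 1/2.
Proof. apply sqrt_step. Qed.

Lemma step1 n : Rabs (jbr (e1p n) - jbr n) * jbr n <= Rabs (IZR (c1 n)) + 1/2.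
Proof.
  destruct n as [[x y] z]. unfold e1p, jbr, nsq, c1, c2, c3; cbn [fst snd]. rewrite plus_IZR.
  replace (1 + ((IZR x + 1) ^ 2 + IZR y ^ 2 + IZR z ^ 2)) with ((1 + IZR y ^ 2 + IZR z ^ 2) + (IZR x + 1) ^ 2) by ring.
  replace (1 + (IZR x ^ 2 + IZR y ^ 2 + IZR z ^ 2)) with ((1 + IZR y ^ 2 + IZR z ^ 2) + IZR x ^ 2) by ring.
  apply step_gen. sq (IZR y); sq (IZR z); lra.
Qed.

Lemma step2 n : Rabs (jbr (e2p n) - jbr n) * jbr n <= Rabs (IZR (c2 n)) + 1/2.
Proof.
  destruct n as [[x y] z]. unfold e2p, jbr, nsq, c1, c2, c3; cbn [fst snd]. rewrite plus_IZR.
  replace (1 + (IZR x ^ 2 + (IZR y + 1) ^ 2 + IZR z ^ 2)) with ((1 + IZR x ^ 2 + IZR z ^ 2) + (IZR y + 1) ^ 2) by ring.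
  replace (1 + (IZR x ^ 2 + IZR y ^ 2 + IZR z ^ 2)) with ((1 + IZR x ^ 2 + IZR z ^ 2) + IZR y ^ 2) by ring.
  apply step_gen. sq (IZR x); sq (IZR z); lra.
Qed.

Lemma step3 n : Rabs (jbr (e3p n) - jbr n) * jbr n <= Rabs (IZR (c3 n)) + 1/2.
Proof.
  destruct n as [[x y] z]. unfold e3p, jbr, nsq, c1, c2, c3; cbn [fst snd]. rewrite plus_IZR.
  replace (1 + (IZR x ^ 2 + IZR y ^ 2 + (IZR z + 1) ^ 2)) with ((1 + IZR x ^ 2 + IZR y ^ 2) + (IZR z + 1) ^ 2) by ring.
  replace (1 + (IZR x ^ 2 + IZR y ^ 2 + IZR z ^ 2)) with ((1 + IZR x ^ 2 + IZR y ^ 2) + IZR z ^ 2) by ring.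
  apply step_gen. sq (IZR x); sq (IZR y); lra.
Qed.

Lemma jbr_perm13 n : jbr (perm13 n) = jbr n.
Proof. destruct n as [[x y] z]. unfold perm13, jbr, nsq, c1, c2, c3; cbn [fst snd]. f_equal; ring. Qed.
Lemma jbr_perm23 n : jbr (perm23 n) = jbr n.
Proof. destruct n as [[x y] z]. unfold perm23, jbr, nsq, c1, c2, c3; cbn [fst snd]. f_equal; ring. Qed.
Lemma lin_perm13 b1 b2 b3 c n : lin b1 b2 b3 c (perm13 n) = lin b3 b2 b1 c n.
Proof. destruct n as [[x y] z]. unfold perm13, lin, c1, c2, c3; cbn [fst snd]. ring. Qed.
Lemma lin_perm23 b1 b2 b3 c n : lin b1 b2 b3 c (perm23 n) = lin b1 b3 b2 c n.
Proof. destruct n as [[x y] z]. unfold perm23, lin, c1, c2, c3; cbn [fst snd]. ring. Qed.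
Lemma perm13_inv n : perm13 (perm13 n) = n.
Proof. destruct n as [[x y] z]. reflexivity. Qed.
Lemma perm23_inv n : perm23 (perm23 n) = n.
Proof. destruct n as [[x y] z]. reflexivity. Qed.
Lemma perm13_e1 n : e3p (perm13 n) = perm13 (e1p n).
Proof. destruct n as [[x y] z]. reflexivity. Qed.
Lemma perm23_e2 n : e3p (perm23 n) = perm23 (e2p n).
Proof. destruct n as [[x y] z]. reflexivity. Qed.
Lemma box_perm13 r n : box r n -> box r (perm13 n).
Proof. destruct n as [[x y] z]. unfold box, perm13, c1, c2, c3; cbn [fst snd]. tauto. Qed.
Lemma box_perm23 r n : box r n -> box r (perm23 n).
Proof. destruct n as [[x y] z]. unfold box, perm23, c1, c2, c3; cbn [fst snd]. tauto. Qed.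

Lemma lin_e1 b1 b2 b3 c n : lin b1 b2 b3 c (e1p n) - lin b1 b2 b3 c n = b1.
Proof. destruct n as [[x y] z]. unfold e1p, lin, c1, c2, c3; cbn [fst snd]. rewrite plus_IZR. ring. Qed.
Lemma lin_e2 b1 b2 b3 c n : lin b1 b2 b3 c (e2p n) - lin b1 b2 b3 c n = b2.
Proof. destruct n as [[x y] z]. unfold e2p, lin, c1, c2, c3; cbn [fst snd]. rewrite plus_IZR. ring. Qed.
Lemma lin_e3 b1 b2 b3 c n : lin b1 b2 b3 c (e3p n) - lin b1 b2 b3 c n = b3.
Proof. destruct n as [[x y] z]. unfold e3p, lin, c1, c2, c3; cbn [fst snd]. rewrite plus_IZR. ring. Qed.

Definition hf b1 b2 b3 c n := jbr n - lin b1 b2 b3 c n.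

Lemma cover3 b1 b2 b3 c n : 300 <= jbr n -> 112/100 <= b1 ^ 2 + b2 ^ 2 + b3 ^ 2 ->
  1/40 <= Rabs (hf b1 b2 b3 c (e1p n) - hf b1 b2 b3 c n) \/
  1/40 <= Rabs (hf b1 b2 b3 c (e2p n) - hf b1 b2 b3 c n) \/
  1/40 <= Rabs (hf b1 b2 b3 c (e3p n) - hf b1 b2 b3 c n).
Proof.
  intros Hv Hb. unfold hf.
  pose proof (lin_e1 b1 b2 b3 c n). pose proof (lin_e2 b1 b2 b3 c n). pose proof (lin_e3 b1 b2 b3 c n).
  replace (jbr (e1p n) - lin b1 b2 b3 c (e1p n) - (jbr n - lin b1 b2 b3 c n)) with
    ((jbr (e1p n) - jbr n) - b1) by lra.
  replace (jbr (e2p n) - lin b1 b2 b3 c (e2p n) - (jbr n - lin b1 b2 b3 c n)) with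
    ((jbr (e2p n) - jbr n) - b2) by lra.
  replace (jbr (e3p n) - lin b1 b2 b3 c (e3p n) - (jbr n - lin b1 b2 b3 c n)) with
    ((jbr (e3p n) - jbr n) - b3) by lra.
  eapply cover_real; eauto using step1, step2, step3, L_vsq.
Qed.

Lemma small_box n : jbr n < 300 -> box 299 n.
Proof.
  intros H. pose proof (L_vsq n) as E. pose proof (L_v1 n).
  assert (V : jbr n ^ 2 < 90000) by nra.
  assert (F : forall k : Z, IZR k ^ 2 < 90000 -> (Z.abs k <= 299)%Z).
  { intros k Hk. assert (Rabs (IZR k) < 300).
    { destruct (Rle_or_lt 300 (Rabs (IZR k))) as [A|A]; auto. rewrite <- pow2_abs in Hk. nra. }
    rewrite <- abs_IZR in H1. apply lt_IZR in H1. lia. }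
  unfold box. sq (IZR (c1 n)); sq (IZR (c2 n)); sq (IZR (c3 n)).
  split; [|split]; apply F; lra.
Qed.

Lemma caseG (b1 b2 b3 c W' : R) (r : Z) (l : list Z3) :
  112/100 <= b1 ^ 2 + b2 ^ 2 + b3 ^ 2 -> 0 <= W' -> (0 <= r)%Z -> NoDup l ->
  (forall n, In n l -> box r n /\ Rabs (jbr n - lin b1 b2 b3 c n) <= W') ->
  INR (length l) <= 599 ^ 3 + 3 * ((2 * IZR r + 1) ^ 2 * (2 * (2 * W' / (1/40) + 1))).
Proof.
  intros Hb HW Hr Hl Hp.
  set (fs := fun n => if Rlt_dec (jbr n) 300 then true else false).
  rewrite (filter_split_length fs l), plus_INR.
  assert (HS : INR (length (filter fs l)) <= 599 ^ 3).
  { replace 599 with (2 * IZR 299 + 1) by (simpl; lra).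
    apply box3; [lia| apply NoDup_filter; auto|].
    intros n Hn. apply filter_In in Hn as [_ Hn]. unfold fs in Hn.
    destruct (Rlt_dec _ _) as [H|]; try discriminate. apply small_box in H. exact H. }
  set (lb := filter (fun n => negb (fs n)) l).
  assert (Hlb : NoDup lb) by (apply NoDup_filter; auto).
  assert (Plb : forall n, In n lb -> box r n /\ Rabs (jbr n - lin b1 b2 b3 c n) <= W' /\ 300 <= jbr n).
  { intros n Hn. apply filter_In in Hn as [Hn Hf]. unfold fs in Hf.
    destruct (Rlt_dec _ _) as [|H]; try discriminate. destruct (Hp n Hn). split; [auto|split; [auto|apply Rnot_lt_le; auto]]. }
  set (B := (2 * IZR r + 1) ^ 2 * (2 * (2 * W' / (1/40) + 1))).
  set (f3 := fun n => if Rle_dec (1/40) (Rabs (hf b1 b2 b3 c (e3p n) - hf b1 b2 b3 c n)) then true else false).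
  set (f1 := fun n => if Rle_dec (1/40) (Rabs (hf b1 b2 b3 c (e1p n) - hf b1 b2 b3 c n)) then true else false).
  rewrite (filter_split_length f3 lb), plus_INR.
  rewrite (filter_split_length f1 (filter (fun n => negb (f3 n)) lb)), plus_INR.
  assert (H3 : INR (length (filter f3 lb)) <= B).
  { apply (dir3G b1 b2 b3 c); try lra; auto. apply NoDup_filter; auto.
    intros n Hn. apply filter_In in Hn as [Hn Hf]. destruct (Plb n Hn) as [P1 [P2 _]].
    unfold f3 in Hf. destruct (Rle_dec _ _) as [H|]; try discriminate. unfold hf in H. split; [auto|split; auto]. }
  assert (H1 : INR (length (filter f1 (filter (fun n => negb (f3 n)) lb))) <= B).
  { rewrite <- (length_map perm13). apply (dir3G b3 b2 b1 c); try lra; auto.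
    - apply NoDup_map_inj_on; [apply NoDup_filter, NoDup_filter; auto|].
      intros p q _ _ E. rewrite <- (perm13_inv p), <- (perm13_inv q), E. auto.
    - intros n' Hn'. apply in_map_iff in Hn' as [n [<- Hn]].
      apply filter_In in Hn as [Hn Hf]. apply filter_In in Hn as [Hn _].
      destruct (Plb n Hn) as [P1 [P2 _]].
      unfold f1 in Hf. destruct (Rle_dec _ _) as [H|]; try discriminate. unfold hf in H.
      rewrite perm13_e1, !jbr_perm13, !lin_perm13. split; [apply box_perm13; auto|split; auto]. }
  assert (H2 : INR (length (filter (fun n => negb (f1 n)) (filter (fun n => negb (f3 n)) lb))) <= B).
  { rewrite <- (length_map perm23). apply (dir3G b1 b3 b2 c); try lra; auto.
    - apply NoDup_map_inj_on; [apply NoDup_filter, NoDup_filter; auto|].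
      intros p q _ _ E. rewrite <- (perm23_inv p), <- (perm23_inv q), E. auto.
    - intros n' Hn'. apply in_map_iff in Hn' as [n [<- Hn]].
      apply filter_In in Hn as [Hn Hf1]. apply filter_In in Hn as [Hn Hf3].
      destruct (Plb n Hn) as [P1 [P2 P3]].
      unfold f1 in Hf1. destruct (Rle_dec _ _) as [|N1]; try discriminate.
      unfold f3 in Hf3. destruct (Rle_dec _ _) as [|N3]; try discriminate.
      destruct (cover3 b1 b2 b3 c n P3 Hb) as [C|[C|C]]; try contradiction.
      unfold hf in C.
      rewrite perm23_e2, !jbr_perm23, !lin_perm23. split; [apply box_perm23; auto|split; auto]. }
  lra.
Qed.

Lemma red_plus_id u v M : M <> 0 ->
  v - (M ^ 2 - (u ^ 2 - v ^ 2)) / (2 * M) = (u + v - M) * (u - v + M) / (2 * M).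
Proof. intros. field. auto. Qed.

Lemma red_minus_id u v M : M <> 0 ->
  v - (u ^ 2 - v ^ 2 - M ^ 2) / (2 * M) = (M - (u - v)) * (u + v + M) / (2 * M).
Proof. intros. field. auto. Qed.

Lemma lin_plus a n M : M <> 0 ->
  lin (- IZR (c1 a) / M) (- IZR (c2 a) / M) (- IZR (c3 a) / M) ((M ^ 2 - znorm a ^ 2) / (2 * M)) n =
  (M ^ 2 - (2 * dot a n + znorm a ^ 2)) / (2 * M).
Proof. intros. unfold lin, dot. field. auto. Qed.

Lemma lin_minus a n M : M <> 0 ->
  lin (IZR (c1 a) / M) (IZR (c2 a) / M) (IZR (c3 a) / M) ((znorm a ^ 2 - M ^ 2) / (2 * M)) n =
  (2 * dot a n + znorm a ^ 2 - M ^ 2) / (2 * M).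
Proof. intros. unfold lin, dot. field. auto. Qed.

Lemma znorm_sq a : znorm a ^ 2 = IZR (c1 a) ^ 2 + IZR (c2 a) ^ 2 + IZR (c3 a) ^ 2.
Proof. rewrite znorm_form. apply sqrt_sq_eq. sq (IZR (c1 a)); sq (IZR (c2 a)); sq (IZR (c3 a)). lra. Qed.

Lemma znorm_pos a : 0 <= znorm a.
Proof. apply sqrt_pos. Qed.

Lemma case_plus (C0 : R) (a : Z3) (m r : Z) (l : list Z3) :
  0 <= C0 -> (1 <= r)%Z -> NoDup l ->
  IZR (c1 a) ^ 2 <= IZR (c3 a) ^ 2 -> IZR (c2 a) ^ 2 <= IZR (c3 a) ^ 2 ->
  20 * (1 + C0) <= znorm a ->
  (forall n, In n l -> box r n /\ Rabs (jbr (z3add a n) + jbr n - IZR m) <= C0) ->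
  INR (length l) <= 23100 * (1 + C0) ^ 2 * (2 * IZR r + 1) ^ 2.
Proof.
  intros HC0 Hr Hl Ha1 Ha2 Hal Hp.
  assert (HR : 1 <= IZR r) by (apply IZR_le; auto).
  set (X := 2 * IZR r + 1).
  destruct l as [|n0 l0].
  { simpl. assert (0 <= X) by (unfold X; lra). assert (0 <= (1+C0)^2) by apply pow2_ge_0. nra. }
  set (al := znorm a) in *. set (M := IZR m).
  assert (HM : 95/100 * al <= M).
  { destruct (Hp n0 (or_introl eq_refl)) as [_ H]. apply Rabs_le_between in H.
    pose proof (L_sum a n0). fold al in H0. fold M in H. lra. }
  assert (HM0 : M <> 0) by lra.
  assert (Hal2 : al ^ 2 = IZR (c1 a) ^ 2 + IZR (c2 a) ^ 2 + IZR (c3 a) ^ 2) by apply znorm_sq.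
  assert (Hb : (- IZR (c1 a) / M) ^ 2 + (- IZR (c2 a) / M) ^ 2 <= 3 / 4).
  { replace ((- IZR (c1 a) / M) ^ 2 + (- IZR (c2 a) / M) ^ 2) with
      ((IZR (c1 a) ^ 2 + IZR (c2 a) ^ 2) / M ^ 2) by (field; auto).
    assert (M ^ 2 >= 9025/10000 * al ^ 2) by nra.
    assert (0 < M ^ 2) by nra.
    apply Rmult_le_reg_r with (M ^ 2); auto. unfold Rdiv. rewrite Rmult_assoc, Rinv_l by lra. lra. }
  eapply Rle_trans.
  { apply (caseP (- IZR (c1 a) / M) (- IZR (c2 a) / M) (- IZR (c3 a) / M) ((M ^ 2 - al ^ 2) / (2 * M)) (2 * C0) r); auto; try lia; try lra.
    intros n Hn. destruct (Hp n Hn) as [Hbox H]. split; auto.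
    unfold al, M. rewrite lin_plus by auto. rewrite <- L_sq. fold al M.
    rewrite red_plus_id by auto.
    pose proof (L_diff a n) as D. fold al in D.
    pose proof (L_sum a n) as S. fold al in S.
    unfold Rdiv. rewrite !Rabs_mult. rewrite Rabs_inv.
    rewrite (Rabs_right (2 * M)) by lra.
    assert (Rabs (jbr (z3add a n) - jbr n + M) <= al + M).
    { eapply Rle_trans; [apply Rabs_triang|]. rewrite (Rabs_right M) by lra. lra. }
    assert (0 < / (2 * M)) by (apply Rinv_0_lt_compat; lra).
    assert (Rabs (jbr (z3add a n) + jbr n - M) * Rabs (jbr (z3add a n) - jbr n + M) <= C0 * (al + M)).
    { apply Rmult_le_compat; auto using Rabs_pos. }
    assert (C0 * (al + M) * / (2 * M) <= 2 * C0).
    { apply Rmult_le_reg_r with (2 * M); [lra|]. rewrite Rmult_assoc, Rinv_l by lra. nra. }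
    assert (Rabs (jbr (z3add a n) + jbr n - M) * Rabs (jbr (z3add a n) - jbr n + M) * / (2 * M) <=
            C0 * (al + M) * / (2 * M)) by (apply Rmult_le_compat_r; lra).
    lra. }
  fold X.
  replace (2 * (1 + 3 * IZR r)) with (3 * X - 1) by (unfold X; ring).
  assert (1 <= X) by (unfold X; lra).
  assert (IZR r + 1 <= X) by (unfold X; lra).
  assert (2 * C0 * (3 * X - 1 + 2 * C0) + IZR r + 1 <= 11 * (1 + C0) ^ 2 * X) by nra.
  assert (0 <= X) by lra.
  nra.
Qed.

Lemma minus_point (a n : Z3) (M C0 : R) (r : Z) :
  box r n -> Rabs (jbr (z3add a n) - jbr n - M) <= C0 -> 0 <= C0 ->
  znorm a ^ 2 <= 16 * M ^ 2 -> 1 <= znorm a ->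
  Rabs (jbr n - lin (IZR (c1 a) / M) (IZR (c2 a) / M) (IZR (c3 a) / M) ((znorm a ^ 2 - M ^ 2) / (2 * M)) n)
    <= C0 * (12 * ((2 * IZR r + 1) / (znorm a + 1)) + 3).
Proof.
  intros Hbox H HC0 HM Hal.
  set (al := znorm a) in *.
  assert (HM0 : M <> 0) by (intro E; rewrite E in HM; nra).
  unfold al. rewrite lin_minus by auto. rewrite <- L_sq. fold al.
  rewrite red_minus_id by auto.
  pose proof (L_diff a n) as D. fold al in D. pose proof (L_vle r n Hbox) as V.
  pose proof (L_v1 n). pose proof (L_u1 a n).
  apply Rabs_le_between in D.
  set (u := jbr (z3add a n)) in *. set (v := jbr n) in *.
  assert (HMa : al <= 4 * Rabs M).
  { apply sq_le_le. pose proof (Rabs_pos M); lra. replace ((4 * Rabs M) ^ 2) with (16 * Rabs M ^ 2) by ring.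
    rewrite pow2_abs. lra. }
  assert (HMp : 0 < Rabs M) by lra.
  unfold Rdiv. rewrite !Rabs_mult, Rabs_inv.
  replace (Rabs (2 * M)) with (2 * Rabs M) by (rewrite Rabs_mult, (Rabs_right 2) by lra; auto).
  rewrite Rabs_minus_sym in H.
  assert (Rabs (u + v + M) <= u + v + Rabs M).
  { eapply Rle_trans; [apply Rabs_triang|]. rewrite (Rabs_right (u + v)) by lra. lra. }
  assert (Hprod : Rabs (M - (u - v)) * Rabs (u + v + M) <= C0 * (u + v + Rabs M)).
  { apply Rmult_le_compat; auto using Rabs_pos. }
  assert (Hinv : 0 < / (2 * Rabs M)) by (apply Rinv_0_lt_compat; lra).
  assert (Huv : u + v <= 3 * (2 * IZR r + 1) + al) by lra.
  set (X := 2 * IZR r + 1) in *.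
  assert (HXd : X = 2 * IZR r + 1) by reflexivity. clearbody X.
  assert (HX : 1 <= X) by lra.
  assert (K1 : (u + v + Rabs M) * / (2 * Rabs M) <= 12 * (X * / (al + 1)) + 3).
  { apply Rmult_le_reg_r with (2 * Rabs M); [lra|]. rewrite Rmult_assoc, Rinv_l by lra.
    assert (E : 12 * (X * / (al + 1)) * (2 * Rabs M) >= 12 * X * (al / 2) * / (al + 1)).
    { assert (0 < / (al + 1)) by (apply Rinv_0_lt_compat; lra).
      assert (X * (al / 2) <= X * (2 * Rabs M)) by (apply Rmult_le_compat_l; lra).
      nra. }
    assert (E2 : 12 * X * (al / 2) * / (al + 1) >= 3 * X).
    { assert (Hq0 : 0 < / (al + 1)) by (apply Rinv_0_lt_compat; lra).
      assert (0 <= X * / (al + 1) * (al - 1)) by (apply Rmult_le_pos; [apply Rmult_le_pos; lra| lra]).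
      assert (E3 : 12 * X * (al / 2) * / (al + 1) - 3 * X = 3 * (X * / (al + 1) * (al - 1))) by (field; lra).
      lra. }
    nra. }
  assert (Rabs (M - (u - v)) * Rabs (u + v + M) * / (2 * Rabs M) <= C0 * (u + v + Rabs M) * / (2 * Rabs M))
    by (apply Rmult_le_compat_r; lra).
  assert (C0 * (u + v + Rabs M) * / (2 * Rabs M) <= C0 * (12 * (X * / (al + 1)) + 3)).
  { rewrite Rmult_assoc. apply Rmult_le_compat_l; auto. }
  lra.
Qed.

Lemma case_minus (C0 : R) (a : Z3) (m r : Z) (l : list Z3) :
  0 <= C0 -> (1 <= r)%Z -> NoDup l ->
  IZR (c1 a) ^ 2 <= IZR (c3 a) ^ 2 -> IZR (c2 a) ^ 2 <= IZR (c3 a) ^ 2 ->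
  20 * (1 + C0) <= znorm a ->
  (forall n, In n l -> box r n /\ Rabs (jbr (z3add a n) - jbr n - IZR m) <= C0) ->
  INR (length l) <= 300000000 * (1 + C0) ^ 2 *
     ((2 * IZR r + 1) ^ 2 * ((2 * IZR r + 1) / (znorm a + 1)) + (2 * IZR r + 1) ^ 2).
Proof.
  intros HC0 Hr Hl Ha1 Ha2 Hal Hp.
  assert (HR : 1 <= IZR r) by (apply IZR_le; auto).
  set (al := znorm a) in *. set (M := IZR m).
  assert (Hal2 : al ^ 2 = IZR (c1 a) ^ 2 + IZR (c2 a) ^ 2 + IZR (c3 a) ^ 2) by apply znorm_sq.
  set (A3 := IZR (c3 a)) in *.
  assert (HA3d : A3 = IZR (c3 a)) by reflexivity.
  assert (Hald : al = znorm a) by reflexivity.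
  assert (HMd : M = IZR m) by reflexivity.
  clearbody A3 al M.
  set (X := 2 * IZR r + 1).
  assert (HXd : X = 2 * IZR r + 1) by reflexivity. clearbody X.
  set (Y := X / (al + 1)).
  assert (HY0 : 0 <= Y) by (unfold Y; apply Rmult_le_pos; [lra|left; apply Rinv_0_lt_compat; lra]).
  assert (HYX : Y <= X).
  { unfold Y. apply Rmult_le_reg_r with (al + 1); [lra|]. unfold Rdiv. rewrite Rmult_assoc, Rinv_l by lra. nra. }
  assert (HXa : X / al <= 2 * Y).
  { unfold Y. apply Rmult_le_reg_r with (al * (al + 1)); [nra|].
    replace (X / al * (al * (al + 1))) with (X * (al + 1)) by (field; lra).
    replace (2 * (X / (al + 1)) * (al * (al + 1))) with (2 * X * al) by (field; lra). nra. }
  assert (HYd : Y = X / (al + 1)) by reflexivity.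
  clearbody Y.
  assert (HC1 : 1 <= (1 + C0) ^ 2) by nra.
  assert (HA3 : al ^ 2 <= 3 * A3 ^ 2) by lra.
  destruct (Rle_or_lt (4 * M ^ 2) (A3 ^ 2)) as [Hsm|Hbg].
  -
    assert (HA3a : al <= 2 * Rabs A3).
    { apply sq_le_le. pose proof (Rabs_pos A3); lra.
      replace ((2 * Rabs A3) ^ 2) with (4 * Rabs A3 ^ 2) by ring. rewrite pow2_abs. sq A3. lra. }
    assert (HA3p : 0 < Rabs A3) by lra.
    assert (HA3s : 0 < A3 ^ 2) by nra.
    eapply Rle_trans; [apply (caseI a M C0 r l); try lia; auto; try (rewrite <- HA3d; auto; fail);
       intros n Hn; rewrite HMd; auto|].
    rewrite <- Hald, <- HA3d, <- HXd.
    assert (K : 2 * C0 * (2 * (1 + 3 * IZR r) + al) / Rabs A3 <= 24 * C0 * Y + 4 * C0).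
    { apply Rmult_le_reg_r with (Rabs A3); auto. unfold Rdiv. rewrite Rmult_assoc, Rinv_l by lra.
      rewrite Rmult_1_r.
      assert (X <= 2 * Y * al).
      { apply Rmult_le_reg_r with (/ al). apply Rinv_0_lt_compat; lra.
        replace (2 * Y * al * / al) with (2 * Y) by (field; lra). unfold Rdiv in HXa. lra. }
      assert (Y * al <= Y * (2 * Rabs A3)) by (apply Rmult_le_compat_l; lra).
      assert (T1 : 2 * (1 + 3 * IZR r) + al <= 12 * Y * Rabs A3 + 2 * Rabs A3) by lra.
      assert (2 * C0 * (2 * (1 + 3 * IZR r) + al) <= 2 * C0 * (12 * Y * Rabs A3 + 2 * Rabs A3))
        by (apply Rmult_le_compat_l; lra).
      lra. }
    assert (0 <= X ^ 2) by apply pow2_ge_0.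
    assert (X ^ 2 * (2 * C0 * (2 * (1 + 3 * IZR r) + al) / Rabs A3 + 1) <= X ^ 2 * (24 * C0 * Y + 4 * C0 + 1))
      by (apply Rmult_le_compat_l; lra).
    assert (0 <= X ^ 2 * Y) by (apply Rmult_le_pos; lra).
    nra.
  -
    assert (HM0 : M <> 0) by (intro E; rewrite E in Hbg; nra).
    assert (H16 : al ^ 2 <= 16 * M ^ 2) by nra.
    set (W := C0 * (12 * Y + 3)).
    assert (HW0 : 0 <= W) by (unfold W; nra).
    assert (Pt : forall n, In n l -> box r n /\
      Rabs (jbr n - lin (IZR (c1 a) / M) (IZR (c2 a) / M) (A3 / M) ((al ^ 2 - M ^ 2) / (2 * M)) n) <= W).
    { intros n Hn. destruct (Hp n Hn) as [Hb Hc]. rewrite <- HMd in Hc. split; auto.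
      pose proof (minus_point a n M C0 r Hb Hc HC0 ltac:(rewrite <- Hald; lra) ltac:(rewrite <- Hald; lra)) as MP.
      rewrite <- Hald, <- HA3d, <- HXd, <- HYd in MP. unfold W. exact MP. }
    destruct (Rle_or_lt (al ^ 2) (112/100 * M ^ 2)) as [Ha|Hb].
    + eapply Rle_trans; [apply (caseP (IZR (c1 a) / M) (IZR (c2 a) / M) (A3 / M) ((al ^ 2 - M ^ 2) / (2 * M)) W r l); auto; try lia|].
      { replace ((IZR (c1 a) / M) ^ 2 + (IZR (c2 a) / M) ^ 2) with
          ((IZR (c1 a) ^ 2 + IZR (c2 a) ^ 2) / M ^ 2) by (field; auto).
        assert (0 < M ^ 2) by nra.
        apply Rmult_le_reg_r with (M ^ 2); auto. unfold Rdiv. rewrite Rmult_assoc, Rinv_l by lra. lra. }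
      rewrite <- HXd.
      replace (2 * (1 + 3 * IZR r)) with (3 * X - 1) by lra.
      assert (E1 : W * (3 * X - 1 + W) + IZR r + 1 <= 253 * (1 + C0) ^ 2 * (X * Y + X)).
      { unfold W. assert (Y * Y <= X * Y) by nra. assert (Y <= X * Y) by nra. nra. }
      assert (0 <= X) by lra.
      assert (X * (2100 * (W * (3 * X - 1 + W) + IZR r + 1)) <= X * (2100 * (253 * (1 + C0) ^ 2 * (X * Y + X))))
        by (apply Rmult_le_compat_l; lra).
      nra.
    + eapply Rle_trans; [apply (caseG (IZR (c1 a) / M) (IZR (c2 a) / M) (A3 / M) ((al ^ 2 - M ^ 2) / (2 * M)) W r l); auto; try lia|].
      { replace ((IZR (c1 a) / M) ^ 2 + (IZR (c2 a) / M) ^ 2 + (A3 / M) ^ 2) with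
          (al ^ 2 / M ^ 2) by (rewrite Hal2; field; auto).
        assert (0 < M ^ 2) by nra.
        apply Rmult_le_reg_r with (M ^ 2); auto.
        replace (al ^ 2 / M ^ 2 * M ^ 2) with (al ^ 2) by (field; auto). lra. }
      rewrite <- HXd.
      replace (2 * (2 * W / (1 / 40) + 1)) with (160 * W + 2) by (field; lra).
      unfold W.
      assert (9 <= X ^ 2) by nra.
      assert (0 <= X ^ 2 * Y) by (apply Rmult_le_pos; nra).
      assert (0 <= C0 * (X ^ 2 * Y)) by (apply Rmult_le_pos; lra).
      assert (0 <= C0 * X ^ 2) by (apply Rmult_le_pos; lra).
      nra.
Qed.

Definition Kc (C0 : R) := 300000000 * (1 + C0) ^ 2.

Lemma core_ord (C0 : R) (a : Z3) (s : bool) (m r : Z) (l : list Z3) :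
  0 <= C0 -> (1 <= r)%Z -> NoDup l ->
  IZR (c1 a) ^ 2 <= IZR (c3 a) ^ 2 -> IZR (c2 a) ^ 2 <= IZR (c3 a) ^ 2 ->
  (forall n, In n l -> box r n /\ Rabs (pm s (jbr (z3add a n)) (jbr n) - IZR m) <= C0) ->
  INR (length l) <= Kc C0 *
     ((2 * IZR r + 1) ^ 2 * ((2 * IZR r + 1) / (znorm a + 1)) + (2 * IZR r + 1) ^ 2).
Proof.
  intros HC0 Hr Hl Ha1 Ha2 Hp. unfold Kc.
  assert (HR : 1 <= IZR r) by (apply IZR_le; auto).
  pose proof (znorm_pos a) as Hal0.
  set (X := 2 * IZR r + 1).
  assert (HX : 3 <= X) by (unfold X; lra).
  assert (HY0 : 0 <= X / (znorm a + 1)) by (apply Rmult_le_pos; [lra|left; apply Rinv_0_lt_compat; lra]).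
  assert (HC1 : 1 <= (1 + C0) ^ 2) by nra.
  assert (HX2 : 0 <= X ^ 2) by apply pow2_ge_0.
  assert (HX2Y : 0 <= X ^ 2 * (X / (znorm a + 1))) by (apply Rmult_le_pos; lra).
  destruct (Rlt_or_le (znorm a) (20 * (1 + C0))) as [Hsm|Hbg].
  - assert (HB3 : INR (length l) <= X ^ 3).
    { unfold X. apply box3; [lia|auto|]. intros n Hn. apply (Hp n Hn). }
    eapply Rle_trans; [exact HB3|].
    assert (E : X ^ 3 = (znorm a + 1) * (X ^ 2 * (X / (znorm a + 1)))) by (field; lra).
    rewrite E.
    assert ((znorm a + 1) * (X ^ 2 * (X / (znorm a + 1))) <= (21 * (1 + C0) ^ 2) * (X ^ 2 * (X / (znorm a + 1)))).
    { apply Rmult_le_compat_r; auto. nra. }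
    nra.
  - destruct s.
    + eapply Rle_trans; [apply (case_plus C0 a m r l); auto|].
      fold X. nra.
    + eapply Rle_trans; [apply (case_minus C0 a m r l); auto|].
      fold X. lra.
Qed.

Lemma z3add_perm13 a n : z3add (perm13 a) (perm13 n) = perm13 (z3add a n).
Proof. destruct a as [[a1 a2] a3]; destruct n as [[x y] z]. unfold perm13, z3add, c1, c2, c3; simpl.
  reflexivity. Qed.
Lemma z3add_perm23 a n : z3add (perm23 a) (perm23 n) = perm23 (z3add a n).
Proof. destruct a as [[a1 a2] a3]; destruct n as [[x y] z]. unfold perm23, z3add, c1, c2, c3; simpl.
  reflexivity. Qed.
Lemma znorm_perm13 a : znorm (perm13 a) = znorm a.
Proof. destruct a as [[x y] z]. unfold perm13, znorm, nsq, c1, c2, c3; cbn [fst snd]. f_equal; ring. Qed.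
Lemma znorm_perm23 a : znorm (perm23 a) = znorm a.
Proof. destruct a as [[x y] z]. unfold perm23, znorm, nsq, c1, c2, c3; cbn [fst snd]. f_equal; ring. Qed.

Lemma core (C0 : R) (a : Z3) (s : bool) (m r : Z) (l : list Z3) :
  0 <= C0 -> (1 <= r)%Z -> NoDup l ->
  (forall n, In n l -> box r n /\ Rabs (pm s (jbr (z3add a n)) (jbr n) - IZR m) <= C0) ->
  INR (length l) <= Kc C0 *
     ((2 * IZR r + 1) ^ 2 * ((2 * IZR r + 1) / (znorm a + 1)) + (2 * IZR r + 1) ^ 2).
Proof.
  intros HC0 Hr Hl Hp.
  destruct (Rle_or_lt (IZR (c1 a) ^ 2) (IZR (c3 a) ^ 2)) as [H13|H13];
  destruct (Rle_or_lt (IZR (c2 a) ^ 2) (IZR (c3 a) ^ 2)) as [H23|H23].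
  - apply core_ord with s m; auto.
  -
    destruct (Rle_or_lt (IZR (c1 a) ^ 2) (IZR (c2 a) ^ 2)) as [H12|H12].
    + rewrite <- (length_map perm23), <- znorm_perm23.
      apply core_ord with s m; auto; try (destruct a as [[x y] z]; unfold perm23, c1, c2, c3 in *; cbn [fst snd] in *; lra).
      * apply NoDup_map_inj_on; auto. intros p q _ _ E. rewrite <- (perm23_inv p), <- (perm23_inv q), E; auto.
      * intros n' Hn'. apply in_map_iff in Hn' as [n [<- Hn]]. destruct (Hp n Hn) as [B H].
        rewrite z3add_perm23, !jbr_perm23. split; auto. apply box_perm23; auto.
    + lra.
  -
    rewrite <- (length_map perm13), <- znorm_perm13.
    destruct (Rle_or_lt (IZR (c2 a) ^ 2) (IZR (c1 a) ^ 2)) as [H21|H21]; [|lra].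
    apply core_ord with s m; auto; try (destruct a as [[x y] z]; unfold perm13, c1, c2, c3 in *; cbn [fst snd] in *; lra).
    * apply NoDup_map_inj_on; auto. intros p q _ _ E. rewrite <- (perm13_inv p), <- (perm13_inv q), E; auto.
    * intros n' Hn'. apply in_map_iff in Hn' as [n [<- Hn]]. destruct (Hp n Hn) as [B H].
      rewrite z3add_perm13, !jbr_perm13. split; auto. apply box_perm13; auto.
  - destruct (Rle_or_lt (IZR (c1 a) ^ 2) (IZR (c2 a) ^ 2)) as [H12|H12].
    + rewrite <- (length_map perm23), <- znorm_perm23.
      apply core_ord with s m; auto; try (destruct a as [[x y] z]; unfold perm23, c1, c2, c3 in *; cbn [fst snd] in *; lra).
      * apply NoDup_map_inj_on; auto. intros p q _ _ E. rewrite <- (perm23_inv p), <- (perm23_inv q), E; auto.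
      * intros n' Hn'. apply in_map_iff in Hn' as [n [<- Hn]]. destruct (Hp n Hn) as [B H].
        rewrite z3add_perm23, !jbr_perm23. split; auto. apply box_perm23; auto.
    + rewrite <- (length_map perm13), <- znorm_perm13.
      apply core_ord with s m; auto; try (destruct a as [[x y] z]; unfold perm13, c1, c2, c3 in *; cbn [fst snd] in *; lra).
      * apply NoDup_map_inj_on; auto. intros p q _ _ E. rewrite <- (perm13_inv p), <- (perm13_inv q), E; auto.
      * intros n' Hn'. apply in_map_iff in Hn' as [n [<- Hn]]. destruct (Hp n Hn) as [B H].
        rewrite z3add_perm13, !jbr_perm13. split; auto. apply box_perm13; auto.
Qed.

Lemma sim_le c x N : 1 <= c -> sim c x N -> x <= c * N.
Proof. unfold sim. destruct (Req_EM_T N 1) as [E|E]; intros; [rewrite E; lra | tauto]. Qed.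

Lemma box_of_norm (n : Z3) (r : Z) (B : R) : znorm n <= B -> B < IZR r -> box r n.
Proof.
  intros H1 H2. unfold znorm in H1.
  assert (Hn : 0 <= nsq n) by (destruct n as [[x y] z]; unfold nsq; sq (IZR x); sq (IZR y); sq (IZR z); lra).
  assert (HB : 0 <= B) by (pose proof (sqrt_pos (nsq n)); lra).
  assert (Hsq : nsq n <= B ^ 2).
  { rewrite <- (sqrt_sq_eq (nsq n)) by auto. apply pow_incr. split; auto. apply sqrt_pos. }
  assert (F : forall k : Z, IZR k ^ 2 <= B ^ 2 -> (Z.abs k <= r)%Z).
  { intros k Hk. assert (Rabs (IZR k) <= B) by (apply sq_le_le; auto; rewrite pow2_abs; auto).
    rewrite <- abs_IZR in H. assert (IZR (Z.abs k) < IZR r) by lra. apply lt_IZR in H0. lia. }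
  destruct n as [[x y] z]. unfold nsq in Hsq. unfold box, c1, c2, c3; cbn [fst snd].
  sq (IZR x); sq (IZR y); sq (IZR z).
  split; [|split]; apply F; lra.
Qed.

Lemma half (c C0 A N' : R) (a : Z3) (s : bool) (m : Z) (l : list Z3) :
  1 <= c -> 0 <= C0 -> 1 <= N' -> 1 <= A -> sim c (znorm a) A -> NoDup l ->
  (forall n, In n l -> znorm n <= c * N' /\ Rabs (pm s (jbr (z3add a n)) (jbr n) - IZR m) <= C0) ->
  INR (length l) <= Kc C0 * 150 * c ^ 4 * / Rmin A N' * N' ^ 3.
Proof.
  intros Hc HC0 HN HA Hsim Hl Hp.
  destruct (archimed (c * N')) as [U1 U2].
  set (r := up (c * N')) in *.
  assert (HcN : 1 <= c * N') by nra.
  assert (Hr : (1 <= r)%Z) by (apply le_IZR; lra).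
  eapply Rle_trans; [apply (core C0 a s m r l); auto|].
  { intros n Hn. destruct (Hp n Hn) as [H1 H2]. split; auto. apply box_of_norm with (c * N'); auto. }
  set (al := znorm a) in *. pose proof (znorm_pos a) as Hal. fold al in Hal.
  set (mn := Rmin A N').
  assert (Hmn1 : 1 <= mn) by (unfold mn; apply Rmin_glb; lra).
  assert (HmnN : mn <= N') by apply Rmin_r.
  assert (Hmnc : mn <= c * (al + 1)).
  { unfold sim in Hsim. destruct (Req_EM_T A 1) as [E|E].
    - unfold mn. rewrite E. assert (Rmin 1 N' <= 1) by apply Rmin_l. nra.
    - destruct Hsim as [S1 S2]. assert (A <= c * al).
      { apply Rmult_le_reg_l with (/ c). apply Rinv_0_lt_compat; lra.
        rewrite <- Rmult_assoc, Rinv_l, Rmult_1_l by lra. lra. }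
      assert (mn <= A) by apply Rmin_l. nra. }
  set (X := 2 * IZR r + 1).
  assert (HX1 : 3 <= X) by (unfold X; assert (1 <= IZR r) by (apply IZR_le; auto); lra).
  assert (HX : X <= 5 * (c * N')) by (unfold X; lra).
  clearbody X r al mn.
  assert (Hq : X / (al + 1) <= 5 * c * N' * c / mn).
  { apply Rmult_le_reg_r with ((al + 1) * mn); [nra|].
    replace (X / (al + 1) * ((al + 1) * mn)) with (X * mn) by (field; lra).
    replace (5 * c * N' * c / mn * ((al + 1) * mn)) with (5 * c * N' * (c * (al + 1))) by (field; lra).
    assert (0 <= X) by lra. assert (0 <= mn) by lra.
    apply Rmult_le_compat; lra. }
  assert (HK : 0 <= Kc C0) by (unfold Kc; assert (0 <= (1 + C0) ^ 2) by apply pow2_ge_0; lra).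
  assert (HX2 : X ^ 2 <= 25 * c ^ 2 * N' ^ 2).
  { replace (25 * c ^ 2 * N' ^ 2) with ((5 * (c * N')) ^ 2) by ring. apply pow_incr; lra. }
  assert (T1 : X ^ 2 * (X / (al + 1)) <= 25 * c ^ 2 * N' ^ 2 * (5 * c * N' * c / mn)).
  { apply Rmult_le_compat; try lra. apply pow2_ge_0. apply Rmult_le_pos; [lra|left; apply Rinv_0_lt_compat; lra]. }
  assert (T2 : X ^ 2 <= 25 * c ^ 2 * N' ^ 3 / mn).
  { apply Rle_trans with (25 * c ^ 2 * N' ^ 2); auto.
    apply Rmult_le_reg_r with mn; [lra|]. replace (25 * c ^ 2 * N' ^ 3 / mn * mn) with (25 * c ^ 2 * N' ^ 2 * N') by (field; lra).
    assert (0 <= 25 * c ^ 2 * N' ^ 2) by (assert (0 <= c ^ 2) by apply pow2_ge_0; assert (0 <= N' ^ 2) by apply pow2_ge_0; nra).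
    apply Rmult_le_compat_l; auto. }
  assert (T3 : 25 * c ^ 2 * N' ^ 2 * (5 * c * N' * c / mn) + 25 * c ^ 2 * N' ^ 3 / mn <= 150 * c ^ 4 * / mn * N' ^ 3).
  { replace (25 * c ^ 2 * N' ^ 2 * (5 * c * N' * c / mn) + 25 * c ^ 2 * N' ^ 3 / mn) with
      ((125 * c ^ 4 + 25 * c ^ 2) * N' ^ 3 / mn) by (field; lra).
    replace (150 * c ^ 4 * / mn * N' ^ 3) with ((150 * c ^ 4) * N' ^ 3 / mn) by (field; lra).
    unfold Rdiv. apply Rmult_le_compat_r; [left; apply Rinv_0_lt_compat; lra|].
    apply Rmult_le_compat_r; [assert (0 <= N' ^ 3) by (apply pow_le; lra); lra|].
    assert (c ^ 2 <= c ^ 4) by (replace (c ^ 4) with (c ^ 2 * c ^ 2) by ring; assert (1 <= c ^ 2) by nra; nra).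
    lra. }
  replace (Kc C0 * 150 * c ^ 4 * / mn * N' ^ 3) with (Kc C0 * (150 * c ^ 4 * / mn * N' ^ 3)) by ring.
  apply Rmult_le_compat_l; auto. lra.
Qed.

Definition zneg (a : Z3) : Z3 := (((- c1 a)%Z, (- c2 a)%Z), (- c3 a)%Z).

Lemma zneg_add a n : z3add (zneg a) (z3add a n) = n.
Proof. destruct a as [[a1 a2] a3]; destruct n as [[x y] z]. unfold zneg, z3add, c1, c2, c3; simpl.
  f_equal; [f_equal|]; lia. Qed.

Lemma znorm_zneg a : znorm (zneg a) = znorm a.
Proof. destruct a as [[x y] z]. unfold zneg, znorm, nsq, c1, c2, c3; cbn [fst snd]. rewrite !opp_IZR. f_equal; ring. Qed.

Theorem lemma4p17 :
  forall c C0 : R, 1 <= c -> 0 <= C0 ->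
  exists K : R, 0 < K /\
  forall (N A B : R) (a : Z3),
    1 <= N -> 1 <= A -> 1 <= B ->
    sim c (znorm a) A ->
    forall (s : bool) (m : Z) (l : list Z3),
      NoDup l ->
      (forall n, In n l -> Sset c C0 N B a s m n) ->
      INR (length l) <= K * / Rmin A (Rmin B N) * (Rmin B N) ^ 3.
Proof.
  intros c C0 Hc HC0.
  exists (Kc C0 * 150 * c ^ 4). split.
  { unfold Kc. repeat apply Rmult_lt_0_compat; try lra; apply pow_lt; lra. }
  intros N A B a HN HA HB Hsim s m l Hl Hp.
  destruct (Rle_or_lt N B) as [NB|BN].
  - rewrite (Rmin_right B N) by lra.
    apply (half c C0 A N a s m l); auto.
    intros n Hn. destruct (Hp n Hn) as [S1 [S2 S3]]. split; auto. apply sim_le; auto.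
  - rewrite (Rmin_left B N) by lra.
    rewrite <- (length_map (z3add a)).
    apply (half c C0 A B (zneg a) s (if s then m else (- m)%Z) (map (z3add a) l)); auto.
    + rewrite znorm_zneg; auto.
    + apply NoDup_map_inj_on; auto. intros p q _ _ E.
      rewrite <- (zneg_add a p), <- (zneg_add a q), E. auto.
    + intros k Hk. apply in_map_iff in Hk as [n [<- Hn]]. destruct (Hp n Hn) as [S1 [S2 S3]].
      split; [apply sim_le; auto|]. rewrite zneg_add.
      destruct s; unfold pm in *.
      * rewrite Rplus_comm. auto.
      * rewrite opp_IZR. rewrite <- Rabs_Ropp. replace (- (jbr n - jbr (z3add a n) - - IZR m)) with
          (jbr (z3add a n) - jbr n - IZR m) by ring. auto.
Qed.
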